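(* Let $n\ge1$, $\rho=2n+1$, and let $\nu$ be an integer with $\nu>\rho-2$. Define on $\mathbb R$ \[ \mathbf b_\nu(\lambda)=\begin{cases}\mathbf c_\nu(\lambda)&\text{if }\frac{\nu-\rho+2}2\in\mathbb Z^+,\\ \lambda\,\mathbf c_\nu(\lambda)&\text{if }\frac{\nu-\rho+2}2\notin\mathbb Z^+,\end{cases} \] where $\mathbf c_\nu(\lambda)=2^{\rho-i\lambda}\frac{\Gamma(\rho-1)\Gamma(i\lambda)}{\Gamma(\frac{i\lambda+\nu+\rho}2)\Gamma(\frac{i\lambda+\rho-\nu-2}2)}$ (extended by continuity at $\lambda=0$). Then (i) $\mathbf b_\nu$ has no zero in $\mathbb R$; (ii) there exists $C>0$ such that for all $\lambda\in\mathbb R$, \[ C^{-1}(1+\lambda^2)^{\frac{2\rho-4-\varepsilon(\nu)}4}\le|\mathbf b_\nu(\lambda)|^{-1}\le C(1+\lambda^2)^{\frac{2\rho-4-\varepsilon(\nu)}4}, \] where $\varepsilon(\nu)=1$ if $\frac{\nu-\rho+2}2\notin\mathbb Z^+$ and $\varepsilon(\nu)=-1$ if $\frac{\nu-\rho+2}2\in\mathbb Z^+$.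
   Context: $\mathbb Z^+$ denotes the set of nonnegative integers (under the hypothesis $\nu>\rho-2$ this is equivalent to positive integers here). *)

(* Defs.v *)
From Stdlib Require Import Reals ZArith ClassicalEpsilon.
From Coquelicot Require Import Coquelicot.
Open Scope R_scope.

Notation CC := Complex.C.
Definition C_CS : CompleteSpace :=
  CompleteNormedModule.CompleteSpace _ C_CompleteNormedModule.

Definition cexp (z : CC) : CC :=
  Cmult (RtoC (exp (Re z))) (cos (Im z), sin (Im z)).

Definition cpow (a : R) (z : CC) : CC := cexp (Cmult z (RtoC (ln a))).

(* Gauss' product for the Gamma function:
   G_N(z) = N! N^z / (z (z+1) ... (z+N)) *)
Fixpoint poch_prod (z : CC) (N : nat) : CC :=
  match N with
  | O => z
  | S m => Cmult (poch_prod z m) (Cplus z (RtoC (INR (S m))))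
  end.

Definition gauss_seq (z : CC) (N : nat) : CC :=
  Cdiv (Cmult (RtoC (INR (fact N))) (cpow (INR N) z)) (poch_prod z N).

(* Complex Gamma function (Gauss' limit formula, valid off the poles
   0, -1, -2, ...): Gamma z = lim_{N -> oo} G_N(z). *)
Definition Gamma (z : CC) : CC := @lim C_CS (filtermap (gauss_seq z) eventually).

Definition rho (n : nat) : R := 2 * INR n + 1.

Definition inZplus (x : R) : Prop := exists k : nat, x = INR k.

Definition cond (n : nat) (nu : Z) : Prop := inZplus ((IZR nu - rho n + 2) / 2).

Definition c_nu (n : nat) (nu : Z) (l : R) : CC :=
  let il : CC := Cmult Ci (RtoC l) in
  Cdiv
    (Cmult (Cmult (cpow 2 (Cminus (RtoC (rho n)) il)) (Gamma (RtoC (rho n - 1))))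
           (Gamma il))
    (Cmult (Gamma (Cdiv (Cplus il (RtoC (IZR nu + rho n))) (RtoC 2)))
           (Gamma (Cdiv (Cplus il (RtoC (rho n - IZR nu - 2))) (RtoC 2)))).

(* b_nu by the formula (meaningful for lambda <> 0) *)
Definition b_raw (n : nat) (nu : Z) (l : R) : CC :=
  if excluded_middle_informative (cond n nu) then c_nu n nu l
  else Cmult (RtoC l) (c_nu n nu l).

Definition b_nu (n : nat) (nu : Z) (l : R) : CC :=
  if Req_EM_T l 0 then @lim C_CS (filtermap (b_raw n nu) (locally' 0))
  else b_raw n nu l.

Definition eps_nu (n : nat) (nu : Z) : R :=
  if excluded_middle_informative (cond n nu) then -1 else 1.

(* Main.v *)
Require Import Defs.
From Stdlib Require Import Reals ZArith Lra Lia Factorial ClassicalEpsilon.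
From Coquelicot Require Import Coquelicot.
Open Scope R_scope.

Lemma C_ext (a b : C) : fst a = fst b -> snd a = snd b -> a = b.
Proof. destruct a, b; simpl; intros; subst; reflexivity. Qed.

Lemma cexp_add (a b : C) : cexp (a + b)%C = (cexp a * cexp b)%C.
Proof.
  unfold cexp; destruct a as [a1 a2], b as [b1 b2]; simpl.
  rewrite exp_plus, cos_plus, sin_plus.
  apply C_ext; simpl; ring.
Qed.

Lemma Cmod_cexp (z : C) : Cmod (cexp z) = exp (Re z).
Proof.
  unfold cexp. rewrite Cmod_mult.
  rewrite Cmod_R. rewrite Rabs_pos_eq by (left; apply exp_pos).
  unfold Cmod; simpl.
  replace (cos (Im z) * (cos (Im z) * 1) + sin (Im z) * (sin (Im z) * 1)) with 1.
  - rewrite sqrt_1; ring.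
  - pose proof (sin2_cos2 (Im z)) as H; unfold Rsqr in H; lra.
Qed.

Lemma cexp_neq0 (z : C) : cexp z <> 0%C.
Proof.
  intro H. assert (Cmod (cexp z) = 0) by (rewrite H; apply Cmod_0).
  rewrite Cmod_cexp in H0. pose proof (exp_pos (Re z)); lra.
Qed.

Lemma cexp_R (x : R) : cexp (RtoC x) = RtoC (exp x).
Proof.
  unfold cexp; simpl. rewrite cos_0, sin_0. apply C_ext; simpl; ring.
Qed.

Lemma cpow_add (a : R) (w1 w2 : C) : cpow a (w1 + w2)%C = (cpow a w1 * cpow a w2)%C.
Proof.
  unfold cpow. rewrite <- cexp_add. f_equal. destruct w1, w2; apply C_ext; simpl; ring.
Qed.

Lemma Cmod_cpow (a : R) (w : C) : Cmod (cpow a w) = exp (Re w * ln a).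
Proof. unfold cpow; rewrite Cmod_cexp; f_equal; destruct w; simpl; ring. Qed.

Lemma cpow_one (a : R) : 0 < a -> cpow a (RtoC 1) = RtoC a.
Proof.
  intro Ha. unfold cpow.
  replace (RtoC 1 * RtoC (ln a))%C with (RtoC (ln a)) by (apply C_ext; simpl; ring).
  rewrite cexp_R, exp_ln; auto.
Qed.

Lemma cpow_neq0 (a : R) (w : C) : cpow a w <> 0%C.
Proof. apply cexp_neq0. Qed.

Lemma Cmod_minus_sym (a b : C) : Cmod (a - b) = Cmod (b - a).
Proof.
  replace (a - b)%C with (- (b - a))%C by (apply C_ext; simpl; ring).
  apply Cmod_opp.
Qed.

Lemma Cmod_le_re_im (z : C) : Cmod z <= Rabs (fst z) + Rabs (snd z).
Proof.
  unfold Cmod. apply Rsqr_incr_0_var.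
  - rewrite Rsqr_sqrt.
    + unfold Rsqr. destruct z as [x y]; simpl.
      pose proof (Rabs_pos x); pose proof (Rabs_pos y).
      replace (x*(x*1) + y*(y*1)) with (Rabs x * Rabs x + Rabs y * Rabs y).
      * nra.
      * rewrite <- !Rabs_mult. rewrite !Rabs_pos_eq by nra. ring.
    + destruct z; simpl; nra.
  - pose proof (Rabs_pos (fst z)); pose proof (Rabs_pos (snd z)); lra.
Qed.


Lemma exp_le_inv (a : R) : a < 1 -> exp a <= / (1 - a).
Proof.
  intro H. pose proof (exp_ineq1_le (- a)) as H1.
  assert (E : exp a * exp (- a) = 1) by (rewrite <- exp_plus; replace (a + - a) with 0 by ring; apply exp_0).
  pose proof (exp_pos a). pose proof (exp_pos (-a)).
  apply (Rmult_le_reg_r (1 - a)); [lra|]. rewrite Rinv_l by lra. nra.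
Qed.

Lemma exp_taylor1 (a : R) : Rabs a <= 1/2 -> Rabs (exp a - 1 - a) <= 2 * a ^ 2.
Proof.
  intro H. apply Rabs_le_between in H. pose proof (exp_ineq1_le a).
  pose proof (exp_le_inv a ltac:(lra)).
  assert (/ (1 - a) - 1 - a <= 2 * a ^ 2).
  { replace (/ (1 - a) - 1 - a) with (a^2 / (1 - a)) by (field; lra).
    apply (Rmult_le_reg_r (1 - a)); [lra|]. unfold Rdiv. rewrite Rmult_assoc, Rinv_l by lra. nra. }
  rewrite Rabs_pos_eq by lra. lra.
Qed.

Lemma exp_m1 (a : R) : Rabs a <= 1/2 -> Rabs (exp a - 1) <= 2 * Rabs a.
Proof.
  intro H. pose proof (exp_taylor1 a H).
  replace (exp a - 1) with ((exp a - 1 - a) + a) by ring.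
  eapply Rle_trans; [apply Rabs_triang|].
  assert (a^2 = Rabs a * Rabs a) by (rewrite <- Rabs_mult; rewrite Rabs_pos_eq; nra).
  pose proof (Rabs_pos a). nra.
Qed.

Lemma exp_le2 (a : R) : a <= 1/2 -> exp a <= 2.
Proof.
  intro H. pose proof (exp_le_inv a ltac:(lra)).
  assert (/ (1 - a) <= 2).
  { apply (Rmult_le_reg_r (1 - a)); [lra|]. rewrite Rinv_l by lra. lra. }
  lra.
Qed.

Lemma sin_abs (b : R) : Rabs (sin b) <= Rabs b.
Proof.
  destruct (Rtotal_order b 0) as [H|[H|H]].
  - pose proof (sin_gt_x b H).
    assert (sin b <= 0 \/ 0 < sin b) as [H1|H1] by lra.
    + rewrite Rabs_left1 by lra. rewrite Rabs_left by lra. lra.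
    + pose proof (SIN_bound b). rewrite (Rabs_left b) by lra. rewrite (Rabs_pos_eq (sin b)) by lra.
      (* sin b > 0 with b < 0 : sin b = - sin (-b), and sin(-b) < -b *)
      pose proof (sin_lt_x (- b) ltac:(lra)). rewrite sin_neg in H3.
      assert (1 <= - b \/ - b < 1) as [H4|H4] by lra; [lra|].
      pose proof (sin_gt_0 (-b) ltac:(lra) ltac:(pose proof PI2_1; lra)). rewrite sin_neg in H5. lra.
  - subst. rewrite sin_0. lra.
  - pose proof (sin_lt_x b H).
    assert (0 <= sin b \/ sin b < 0) as [H1|H1] by lra.
    + rewrite !Rabs_pos_eq by lra. lra.
    + pose proof (SIN_bound b). rewrite (Rabs_left (sin b)) by lra. rewrite (Rabs_pos_eq b) by lra.
      assert (1 <= b \/ b < 1) as [H4|H4] by lra; [lra|].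
      pose proof (sin_gt_0 b ltac:(lra) ltac:(pose proof PI2_1; lra)). lra.
Qed.

Lemma cos_bd (b : R) : 0 <= 1 - cos b <= b ^ 2 / 2.
Proof.
  assert (Hc : cos b = 1 - 2 * sin (b/2) * sin (b/2)) by (rewrite <- cos_2a_sin; f_equal; field).
  rewrite Hc.
  pose proof (sin_abs (b/2)).
  assert (sin (b/2) * sin (b/2) = Rabs (sin (b/2)) * Rabs (sin (b/2))) by (rewrite <- Rabs_mult; rewrite Rabs_pos_eq; nra).
  assert ((b/2)^2 = Rabs (b/2) * Rabs (b/2)) by (rewrite <- Rabs_mult; rewrite Rabs_pos_eq; nra).
  pose proof (Rabs_pos (sin (b/2))).
  assert (Rabs (sin (b/2)) * Rabs (sin (b/2)) <= Rabs (b/2) * Rabs (b/2)) by (apply Rmult_le_compat; lra).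
  assert (b^2/2 = 2*((b/2)^2)) by field.
  split; nra.
Qed.

Lemma sin_lb_pos (b : R) : 0 <= b <= 1 -> b - b^3/6 <= sin b.
Proof.
  intros. assert (b <= PI) by (pose proof PI2_1; lra).
  destruct (SIN b) as [H1 _]; try lra.
  unfold sin_lb, sin_approx, sin_term in H1.
  simpl sum_f_R0 in H1.
  replace (INR (fact (2 * 0 + 1))) with 1 in H1 by (simpl; ring).
  replace (INR (fact (2 * 1 + 1))) with 6 in H1 by (simpl; ring).
  replace (INR (fact (2 * 2 + 1))) with 120 in H1 by (simpl; ring).
  replace (INR (fact (2 * 3 + 1))) with 5040 in H1 by (simpl; ring).
  simpl in H1.
  assert (0 <= b^3) by (apply pow_le; lra).
  assert (b^5 <= b^3) . { replace (b^5) with (b^3*(b*b)) by ring. assert (b*b <= 1) by nra. nra. }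
  assert (0 <= b^7) by (apply pow_le; lra).
  assert (b^7 <= b^5) . { replace (b^7) with (b^5*(b*b)) by ring. assert (b*b <= 1) by nra. assert (0 <= b^5) by (apply pow_le; lra). nra. }
  simpl in *. lra.
Qed.

Lemma sin_cub (b : R) : Rabs b <= 1 -> Rabs (sin b - b) <= Rabs b ^ 3 / 6.
Proof.
  intro H. destruct (Rle_dec 0 b) as [Hb|Hb].
  - rewrite (Rabs_pos_eq b) in * by lra.
    pose proof (sin_lb_pos b ltac:(lra)).
    assert (sin b <= b) by (destruct (Req_dec b 0); [subst; rewrite sin_0; lra| left; apply sin_lt_x; lra]).
    rewrite Rabs_left1 by lra. lra.
  - rewrite (Rabs_left b) in * by lra.
    pose proof (sin_lb_pos (-b) ltac:(lra)). rewrite sin_neg in H0.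
    pose proof (sin_gt_x b ltac:(lra)).
    rewrite Rabs_pos_eq by lra. replace ((-b)^3) with (- b^3) in * by ring. lra.
Qed.

Lemma im_le_Cmod (c : C) : Rabs (snd c) <= Cmod c.
Proof. eapply Rle_trans; [apply Rmax_r|apply Rmax_Cmod]. Qed.

Lemma re_le_Cmod' (c : C) : Rabs (fst c) <= Cmod c.
Proof. eapply Rle_trans; [apply Rmax_l|apply Rmax_Cmod]. Qed.

Lemma cexp_bound (u : C) : Cmod u <= 1/2 -> Cmod (cexp u - 1 - u) <= 3 * Cmod u ^ 2.
Proof.
  intro H. destruct u as [a b].
  assert (Hm : Cmod (a, b) ^ 2 = a^2 + b^2).
  { unfold Cmod; cbn [fst snd]. rewrite pow2_sqrt; [ring| nra]. }
  assert (Ha : Rabs a <= 1/2) by (eapply Rle_trans; [|apply H]; apply (re_le_Cmod' (a,b))).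
  assert (Hb : Rabs b <= 1/2) by (eapply Rle_trans; [|apply H]; apply (im_le_Cmod (a,b))).
  eapply Rle_trans; [apply Cmod_le_re_im|]. rewrite Hm.
  unfold cexp; simpl.
  replace (exp a * cos b - 0 * sin b + - (1) + - a) with ((exp a - 1 - a) - exp a * (1 - cos b)) by ring.
  replace (exp a * sin b + 0 * cos b + - 0 + - b) with ((exp a - 1) * sin b + (sin b - b)) by ring.
  pose proof (exp_taylor1 a Ha). pose proof (exp_m1 a Ha).
  pose proof (exp_le2 a ltac:(apply Rabs_le_between in Ha; lra)).
  pose proof (cos_bd b). pose proof (sin_abs b). pose proof (sin_cub b ltac:(lra)).
  pose proof (exp_pos a).
  assert (E1 : Rabs ((exp a - 1 - a) - exp a * (1 - cos b)) <= 2 * a^2 + b^2).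
  { unfold Rminus at 1. eapply Rle_trans. apply Rabs_triang. rewrite Rabs_Ropp, Rabs_mult, (Rabs_pos_eq (exp a)) by lra.
    rewrite (Rabs_pos_eq (1 - cos b)) by lra. nra. }
  assert (E2 : Rabs ((exp a - 1) * sin b + (sin b - b)) <= a^2 + 2 * b^2).
  { eapply Rle_trans; [apply Rabs_triang|]. rewrite Rabs_mult.
    pose proof (Rabs_pos a); pose proof (Rabs_pos b); pose proof (Rabs_pos (sin b)).
    pose proof (Rabs_pos (exp a - 1)).
    assert (a^2 = Rabs a * Rabs a) by (rewrite <- Rabs_mult; rewrite Rabs_pos_eq; nra).
    assert (b^2 = Rabs b * Rabs b) by (rewrite <- Rabs_mult; rewrite Rabs_pos_eq; nra).
    assert (Rabs (exp a - 1) * Rabs (sin b) <= 2 * Rabs a * Rabs b) by (apply Rmult_le_compat; nra).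
    assert (0 <= Rabs b ^ 2) by (apply pow_le; auto).
    assert (Rabs b ^ 3 <= Rabs b ^ 2) by (replace (Rabs b ^ 3) with (Rabs b ^ 2 * Rabs b) by ring; nra).
    assert (2 * Rabs a * Rabs b <= a^2 + b^2) by (pose proof (pow2_ge_0 (Rabs a - Rabs b)); nra).
    assert (Rabs b ^ 2 = b^2) by (simpl; nra).
    lra. }
  simpl in E1, E2. lra.
Qed.

Lemma Cinv0 : (/ RtoC 0)%C = RtoC 0.
Proof. apply C_ext; simpl; unfold Rdiv; ring. Qed.

Lemma Cinv_mult_gen (p q : C) : (/ (p * q) = / p * / q)%C.
Proof.
  destruct (Ceq_dec p 0) as [Hp|Hp].
  - rewrite Hp. replace (0 * q)%C with (RtoC 0) by ring. rewrite Cinv0. ring.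
  - destruct (Ceq_dec q 0) as [Hq|Hq].
    + rewrite Hq. replace (p * 0)%C with (RtoC 0) by ring. rewrite Cinv0. ring.
    + field. auto.
Qed.

Lemma poch_S (z : C) (N : nat) : poch_prod z (S N) = (poch_prod z N * (z + RtoC (INR (S N))))%C.
Proof. reflexivity. Qed.

Definition rr (K : R) (z : C) : C :=
  (cexp (z * RtoC (ln K - ln (K - 1))) * RtoC K / (z + RtoC K))%C.

Lemma gauss_rec (z : C) (N : nat) : (1 <= N)%nat ->
  gauss_seq z (S N) = (gauss_seq z N * rr (INR (S N)) z)%C.
Proof.
  intro HN. unfold gauss_seq, rr, Cdiv.
  replace (INR (S N) - 1) with (INR N) by (rewrite S_INR; ring).
  assert (HNp : 0 < INR N) by (apply lt_0_INR; lia).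
  assert (HSp : 0 < INR (S N)) by (apply lt_0_INR; lia).
  assert (Hc : cpow (INR (S N)) z = (cpow (INR N) z * cexp (z * RtoC (ln (INR (S N)) - ln (INR N))))%C).
  { unfold cpow. rewrite <- cexp_add. f_equal. destruct z; apply C_ext; simpl; ring. }
  rewrite Hc. rewrite poch_S. rewrite Cinv_mult_gen.
  rewrite fact_simpl, mult_INR.
  replace (RtoC (INR (S N) * INR (fact N))) with (RtoC (INR (S N)) * RtoC (INR (fact N)))%C
    by (apply C_ext; simpl; ring).
  ring.
Qed.

Lemma ln_bounds (K : R) : 2 <= K -> / K <= ln K - ln (K - 1) <= / (K - 1).
Proof.
  intro HK.
  assert (Hle : forall x, 0 < x -> ln x <= x - 1).
  { intros x Hx. pose proof (exp_ineq1_le (ln x)). rewrite exp_ln in H; lra. }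
  split.
  - pose proof (Hle ((K-1)/K) ltac:(apply Rdiv_lt_0_compat; lra)).
    rewrite ln_div in H by lra.
    replace ((K-1)/K - 1) with (- / K) in H by (field; lra). lra.
  - pose proof (Hle (K/(K-1)) ltac:(apply Rdiv_lt_0_compat; lra)).
    rewrite ln_div in H by lra.
    replace (K/(K-1) - 1) with (/ (K - 1)) in H by (field; lra). lra.
Qed.

Lemma Cmod_RtoC_abs (x : R) : Cmod (RtoC x) = Rabs x.
Proof. apply Cmod_R. Qed.

Lemma rr_bound (R0 K : R) (z : C) : 0 <= R0 -> Cmod z <= R0 -> 2 * R0 + 2 <= K ->
  Cmod (rr K z - 1) <= (12 * R0 ^ 2 + 2 * R0) * (/ (K - 1) - / K).
Proof.
  intros HR Hz HK.
  set (L := ln K - ln (K - 1)).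
  pose proof (ln_bounds K ltac:(lra)) as HL. fold L in HL.
  set (u := (z * RtoC L)%C).
  assert (Hzk : (z + RtoC K)%C <> 0%C).
  { intro H. assert (Cmod (z + RtoC K) = 0) by (rewrite H; apply Cmod_0).
    pose proof (Cmod_triangle (z + RtoC K) (- z)).
    replace (z + RtoC K + - z)%C with (RtoC K) in H1 by ring.
    rewrite Cmod_opp, Cmod_R, Rabs_pos_eq in H1; lra. }
  assert (Hzk2 : K / 2 <= Cmod (z + RtoC K)).
  { pose proof (Cmod_triangle (z + RtoC K) (- z)).
    replace (z + RtoC K + - z)%C with (RtoC K) in H by ring.
    rewrite Cmod_opp, Cmod_R, Rabs_pos_eq in H; lra. }
  pose proof (Rinv_0_lt_compat K ltac:(lra)) as HiK.
  assert (HK0 : RtoC K <> RtoC 0) by (intro H; apply RtoC_inj in H; lra).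
  assert (E : (rr K z - 1 = (cexp u - 1 - u + z * RtoC (L - / K)) * (RtoC K / (z + RtoC K)))%C).
  { unfold rr. fold L. fold u. unfold u. rewrite RtoC_minus, RtoC_inv by lra.
    field. split; auto. }
  rewrite E, Cmod_mult, Cmod_div by auto. rewrite Cmod_R, Rabs_pos_eq by lra.
  assert (HKd : K / Cmod (z + RtoC K) <= 2).
  { apply (Rmult_le_reg_r (Cmod (z + RtoC K))); [lra|].
    unfold Rdiv. rewrite Rmult_assoc, Rinv_l by lra. lra. }
  assert (Hu : Cmod u <= R0 / (K - 1)).
  { unfold u. rewrite Cmod_mult, Cmod_R, Rabs_pos_eq by (pose proof (Rinv_0_lt_compat K); lra).
    unfold Rdiv. apply Rmult_le_compat; try lra; apply Cmod_ge_0. }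
  assert (Hd : / (K - 1) - / K = / (K * (K - 1))) by (field; lra).
  assert (Hu2 : R0 / (K - 1) <= 1/2).
  { apply (Rmult_le_reg_r (K - 1)); [lra|]. unfold Rdiv. rewrite Rmult_assoc, Rinv_l by lra. lra. }
  assert (Hsq : (R0 / (K - 1)) ^ 2 <= 2 * R0 ^ 2 * (/ (K - 1) - / K)).
  { rewrite Hd.
    assert (E2 : 2 * R0^2 * / (K*(K-1)) - (R0/(K-1))^2 = R0^2 * (K - 2) / (K * (K-1)^2)) by (field; lra).
    assert (0 <= R0^2 * (K - 2) / (K * (K-1)^2)).
    { apply Rle_mult_inv_pos. pose proof (pow2_ge_0 R0); nra.
      apply Rmult_lt_0_compat; [lra|apply pow_lt; lra]. }
    lra. }
  pose proof (cexp_bound u ltac:(lra)) as Hc.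
  assert (HCu2 : Cmod u ^ 2 <= (R0 / (K - 1)) ^ 2) by (apply pow_incrst_1 || (pose proof (Cmod_ge_0 u); nra)).
  assert (HL2 : Cmod (z * RtoC (L - / K)) <= R0 * (/ (K - 1) - / K)).
  { rewrite Cmod_mult, Cmod_R. apply Rmult_le_compat; try lra; try apply Cmod_ge_0; try apply Rabs_pos.
    rewrite Rabs_pos_eq; lra. }
  assert (Htri : Cmod (cexp u - 1 - u + z * RtoC (L - / K)) <= 3 * Cmod u ^ 2 + R0 * (/ (K - 1) - / K)).
  { eapply Rle_trans; [apply Cmod_triangle|]. lra. }
  assert (0 <= / (K - 1) - / K) by (rewrite Hd; apply Rlt_le, Rinv_0_lt_compat; nra).
  assert (0 <= Cmod (cexp u - 1 - u + z * RtoC (L - / K))) by apply Cmod_ge_0.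
  assert (0 <= K / Cmod (z + RtoC K)) by (apply Rle_mult_inv_pos; lra).
  apply Rle_trans with ((3 * Cmod u ^ 2 + R0 * (/ (K - 1) - / K)) * 2).
  - apply Rmult_le_compat; lra.
  - nra.
Qed.

Definition cvC (s : nat -> C) (L : C) :=
  forall eps, 0 < eps -> exists N, forall n, (N <= n)%nat -> Cmod (s n - L) < eps.

Lemma ball_of_Cmod (x y : C) (eps : R) : Cmod (y - x) < eps -> @ball C_CS x eps y.
Proof. intro H. apply C_NormedModule_mixin_compat1. exact H. Qed.

Lemma Cmod_of_ball (x y : C) (eps : posreal) : @ball C_CS x eps y -> Cmod (y - x) < @norm_factor _ C_NormedModule * eps.
Proof. intro H. apply (@norm_compat2 _ C_NormedModule x y eps H). Qed.

Lemma cvC_filterlim (s : nat -> C) (L : C) : cvC s L -> @filterlim nat C_CS s eventually (@locally C_CS L).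
Proof.
  intro H. apply (@filterlim_locally nat C_CS eventually _ s L).
  intro eps. destruct (H eps (cond_pos eps)) as [N HN]. exists N. intros n Hn.
  apply ball_of_Cmod. apply HN. lia.
Qed.

Lemma filterlim_cvC (s : nat -> C) (L : C) : @filterlim nat C_CS s eventually (@locally C_CS L) -> cvC s L.
Proof.
  intros H eps Heps.
  pose proof (@norm_factor_gt_0 _ C_NormedModule) as Hnf.
  assert (Hp : 0 < eps / @norm_factor _ C_NormedModule) by (apply Rdiv_lt_0_compat; lra).
  pose proof (proj1 (@filterlim_locally nat C_CS eventually _ s L) H (mkposreal _ Hp)) as H1.
  destruct H1 as [N HN]. exists N. intros n Hn.
  pose proof (Cmod_of_ball _ _ _ (HN n Hn)). simpl in H0.
  replace (norm_factor * (eps / norm_factor)) with eps in H0 by (field; lra). exact H0.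
Qed.

Lemma cvC_lim (s : nat -> C) (L : C) : cvC s L -> @lim C_CS (filtermap s eventually) = L.
Proof.
  intro H.
  assert (FF : ProperFilter (filtermap s eventually)) by (apply filtermap_proper_filter, eventually_filter).
  pose proof (cvC_filterlim s L H) as HL.
  assert (Hc : cauchy (filtermap s eventually)).
  { intro eps. exists L. apply HL. apply locally_ball. }
  pose proof (@complete_cauchy C_CS _ FF Hc) as Hlim.
  apply (@is_filter_lim_unique _ C_NormedModule (filtermap s eventually) (Proper_StrongProper _ FF)).
  - intros P [eps HP]. eapply filter_imp; [|apply (Hlim eps)]. intros x Hx. apply HP. exact Hx.
  - exact HL.
Qed.

Lemma cauchy_cvC (s : nat -> C) :
  (forall eps, 0 < eps -> exists N, forall n m, (N <= n)%nat -> (N <= m)%nat -> Cmod (s n - s m) < eps) ->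
  exists L, cvC s L.
Proof.
  intro H.
  destruct (proj1 (@filterlim_locally_cauchy nat C_CS eventually eventually_filter s)) as [L HL].
  - intro eps. destruct (H eps (cond_pos eps)) as [N HN].
    exists (fun n => (N <= n)%nat). split.
    + exists N. auto.
    + intros u v Hu Hv. apply ball_of_Cmod. apply HN; auto.
  - exists L. apply filterlim_cvC. exact HL.
Qed.

Lemma one_plus_le_exp (x : R) : 1 + x <= exp x.
Proof. apply exp_ineq1_le. Qed.

Lemma one_minus_ge_exp (e : R) : 0 <= e <= 1/2 -> exp (- (2 * e)) <= 1 - e.
Proof.
  intro H. pose proof (exp_ineq1_le (2 * e)).
  assert (E : exp (- (2 * e)) = / exp (2 * e)) by (apply exp_Ropp).
  rewrite E. pose proof (exp_pos (2 * e)).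
  apply (Rmult_le_reg_r (exp (2 * e))); [lra|]. rewrite Rinv_l by lra. nra.
Qed.

Lemma prod_gen (g q : nat -> C) (f : nat -> R) (N : nat) :
  (forall M, (N <= M)%nat -> g (S M) = (g M * q M)%C /\ Cmod (q M - 1) <= f (S M) - f M
     /\ 0 <= f (S M) - f M <= 1/2) ->
  forall d, Cmod (g (N + d)%nat - g N) <= Cmod (g N) * (exp (f (N + d)%nat - f N) - 1)
     /\ Cmod (g N) * exp (- (2 * (f (N + d)%nat - f N))) <= Cmod (g (N + d)%nat).
Proof.
  intros H d. induction d as [|d [IH1 IH2]].
  - rewrite Nat.add_0_r. replace (f N - f N) with 0 by ring.
    replace (- (2 * 0)) with 0 by ring. rewrite exp_0.
    replace (g N - g N)%C with (RtoC 0) by ring. rewrite Cmod_0. lra.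
  - destruct (H (N + d)%nat ltac:(lia)) as [Hg [Hq He]].
    rewrite <- plus_n_Sm. rewrite Hg.
    set (e := f (S (N + d)) - f (N + d)%nat) in *.
    set (D := f (N + d)%nat - f N) in *.
    replace (f (S (N + d)) - f N) with (D + e) by (unfold D, e; ring).
    pose proof (Cmod_ge_0 (g N)). pose proof (Cmod_ge_0 (g (N + d)%nat - g N)).
    pose proof (Cmod_ge_0 (q (N + d)%nat - 1)).
    assert (HD : 0 <= exp D - 1).
    { assert (0 <= D).
      { unfold D. clear -H. induction d. rewrite Nat.add_0_r; lra.
        destruct (H (N + d)%nat ltac:(lia)) as [_ [_ He]]. rewrite <- plus_n_Sm. lra. }
      pose proof (one_plus_le_exp D). lra. }
    split.
    + replace (g (N + d)%nat * q (N + d)%nat - g N)%C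
        with ((g (N + d)%nat - g N) * q (N + d)%nat + g N * (q (N + d)%nat - 1))%C by ring.
      eapply Rle_trans; [apply Cmod_triangle|]. rewrite !Cmod_mult.
      assert (Hq1 : Cmod (q (N + d)%nat) <= 1 + e).
      { replace (q (N + d)%nat) with ((q (N + d)%nat - 1) + 1)%C by ring.
        eapply Rle_trans; [apply Cmod_triangle|]. rewrite Cmod_1. lra. }
      rewrite exp_plus.
      pose proof (one_plus_le_exp e). pose proof (exp_pos D).
      apply Rle_trans with (Cmod (g N) * (exp D - 1) * (1 + e) + Cmod (g N) * e).
      * apply Rplus_le_compat; [apply Rmult_le_compat; try lra; apply Cmod_ge_0|].
        apply Rmult_le_compat_l; lra.
      * assert (exp D * (1 + e) <= exp D * exp e) by (apply Rmult_le_compat_l; lra).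
        nra.
    + rewrite Cmod_mult.
      assert (Hq1 : 1 - e <= Cmod (q (N + d)%nat)).
      { pose proof (Cmod_triangle (q (N + d)%nat) (- (q (N + d)%nat - 1))).
        replace (q (N + d)%nat + - (q (N + d)%nat - 1))%C with (RtoC 1) in H3 by ring.
        rewrite Cmod_1, Cmod_opp in H3. lra. }
      pose proof (one_minus_ge_exp e He).
      replace (- (2 * (D + e))) with (- (2 * D) + - (2 * e)) by ring. rewrite exp_plus.
      pose proof (exp_pos (- (2 * D))). pose proof (exp_pos (- (2 * e))).
      apply Rle_trans with (Cmod (g N) * exp (- (2 * D)) * (1 - e)).
      * rewrite Rmult_assoc. apply Rmult_le_compat_l; [lra|]. apply Rmult_le_compat_l; lra.
      * apply Rmult_le_compat; try lra. apply Rmult_le_pos; lra.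
Qed.

Definition Cst (R0 : R) := 12 * R0 ^ 2 + 2 * R0.

Lemma nat_large (x : R) : exists n : nat, x <= INR n.
Proof. destruct (INR_unbounded x) as [n Hn]. exists n. lra. Qed.

Lemma gauss_est (R0 : R) : 0 <= R0 -> exists k0 : nat, (1 <= k0)%nat /\ 2 * Cst R0 + 1 <= INR k0 /\
  forall z, Cmod z <= R0 -> forall N M, (k0 <= N)%nat -> (N <= M)%nat ->
    Cmod (gauss_seq z M - gauss_seq z N) <= Cmod (gauss_seq z N) * (2 * Cst R0 / INR N)
    /\ Cmod (gauss_seq z N) * exp (-1) <= Cmod (gauss_seq z M).
Proof.
  intro HR.
  assert (HC : 0 <= Cst R0) by (unfold Cst; pose proof (pow2_ge_0 R0); nra).
  destruct (nat_large (2 * R0 + 2 + 2 * Cst R0 + 1)) as [k0 Hk0].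
  assert (Hk1 : (1 <= k0)%nat) by (apply INR_le; simpl; lra).
  exists k0. split; [auto|]. split; [lra|].
  intros z Hz N M HN HM.
  assert (HNp : INR k0 <= INR N) by (apply le_INR; auto).
  set (f := fun m : nat => - (Cst R0 / INR m)).
  assert (Hgen := prod_gen (gauss_seq z) (fun m => rr (INR (S m)) z) f N).
  destruct (Hgen) with (d := (M - N)%nat) as [H1 H2].
  { intros m Hm. assert (Hmp : INR k0 <= INR m) by (apply le_INR; lia).
    assert (0 < INR m) by lra.
    assert (Hf : f (S m) - f m = Cst R0 * (/ INR m - / INR (S m))).
    { unfold f. rewrite S_INR. field. lra. }
    split; [apply gauss_rec; lia|]. split.
    - rewrite Hf. replace (INR m) with (INR (S m) - 1) by (rewrite S_INR; ring).
      apply rr_bound; auto. rewrite S_INR; lra.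
    - rewrite Hf. rewrite S_INR.
      assert (/ INR m - / (INR m + 1) = / (INR m * (INR m + 1))) by (field; lra).
      rewrite H0. split.
      + apply Rmult_le_pos; [lra|]. apply Rlt_le, Rinv_0_lt_compat; nra.
      + assert (Cst R0 <= INR m * (INR m + 1) / 2) by nra.
        apply (Rmult_le_reg_r (INR m * (INR m + 1))); [nra|].
        rewrite Rmult_assoc, Rinv_l by nra. lra. }
  replace (N + (M - N))%nat with M in * by lia.
  assert (HNp' : 0 < INR N) by lra.
  assert (Hd : 0 <= f M - f N <= Cst R0 / INR N).
  { unfold f. assert (INR N <= INR M) by (apply le_INR; auto).
    assert (Cst R0 / INR M <= Cst R0 / INR N).
    { unfold Rdiv. apply Rmult_le_compat_l; auto. apply Rinv_le_contravar; lra. }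
    assert (0 <= Cst R0 / INR M) by (apply Rle_mult_inv_pos; lra). lra. }
  assert (Hs : Cst R0 / INR N <= 1/2).
  { apply (Rmult_le_reg_r (INR N)); [lra|]. unfold Rdiv. rewrite Rmult_assoc, Rinv_l by lra. lra. }
  split.
  - eapply Rle_trans; [apply H1|]. apply Rmult_le_compat_l; [apply Cmod_ge_0|].
    pose proof (exp_m1 (f M - f N) ltac:(rewrite Rabs_pos_eq; lra)).
    rewrite Rabs_pos_eq in H by (pose proof (one_plus_le_exp (f M - f N)); lra).
    rewrite Rabs_pos_eq in H by lra. unfold Rdiv in *. lra.
  - eapply Rle_trans; [|apply H2]. apply Rmult_le_compat_l; [apply Cmod_ge_0|].
    destruct (Req_dec (-1) (-(2*(f M - f N)))) as [E|E]; [rewrite E; lra | left; apply exp_increasing; lra].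
Qed.

Lemma cvC_unique (s : nat -> C) (L1 L2 : C) : cvC s L1 -> cvC s L2 -> L1 = L2.
Proof.
  intros H1 H2. rewrite <- (cvC_lim s L1 H1). apply cvC_lim; auto.
Qed.

Lemma cvC_close (s t : nat -> C) (L : C) : cvC s L ->
  (forall eps, 0 < eps -> exists N, forall n, (N <= n)%nat -> Cmod (t n - s n) < eps) -> cvC t L.
Proof.
  intros Hs Ht eps Heps.
  destruct (Hs (eps/2) ltac:(lra)) as [N1 H1]. destruct (Ht (eps/2) ltac:(lra)) as [N2 H2].
  exists (max N1 N2). intros n Hn.
  replace (t n - L)%C with ((t n - s n) + (s n - L))%C by ring.
  eapply Rle_lt_trans; [apply Cmod_triangle|].
  pose proof (H1 n ltac:(lia)). pose proof (H2 n ltac:(lia)). lra.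
Qed.

Lemma cvC_scal (s : nat -> C) (L a : C) : cvC s L -> cvC (fun n => a * s n)%C (a * L)%C.
Proof.
  intros H eps Heps.
  destruct (H (eps / (Cmod a + 1))) as [N HN].
  { apply Rdiv_lt_0_compat; [lra|]. pose proof (Cmod_ge_0 a); lra. }
  exists N. intros n Hn.
  replace (a * s n - a * L)%C with (a * (s n - L))%C by ring.
  rewrite Cmod_mult. pose proof (HN n Hn). pose proof (Cmod_ge_0 a).
  pose proof (Cmod_ge_0 (s n - L)).
  apply Rle_lt_trans with ((Cmod a + 1) * Cmod (s n - L)).
  - nra.
  - apply (Rmult_lt_compat_l (Cmod a + 1)) in H0; [|lra].
    replace ((Cmod a + 1) * (eps / (Cmod a + 1))) with eps in H0 by (field; lra). lra.
Qed.

Lemma gauss_bounded (z : C) : exists B, exists k0, forall n, (k0 <= n)%nat -> Cmod (gauss_seq z n) <= B.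
Proof.
  destruct (gauss_est (Cmod z) (Cmod_ge_0 z)) as [k0 [Hk1 [Hk2 H]]].
  exists (Cmod (gauss_seq z k0) * 2), k0. intros n Hn.
  destruct (H z (Rle_refl _) k0 n (Nat.le_refl _) Hn) as [H1 _].
  assert (HC : 0 <= Cst (Cmod z)) by (unfold Cst; pose proof (pow2_ge_0 (Cmod z)); pose proof (Cmod_ge_0 z); nra).
  assert (2 * Cst (Cmod z) / INR k0 <= 1).
  { apply (Rmult_le_reg_r (INR k0)); [lra|]. unfold Rdiv. rewrite Rmult_assoc, Rinv_l by lra. lra. }
  pose proof (Cmod_triangle (gauss_seq z n - gauss_seq z k0) (gauss_seq z k0)).
  replace (gauss_seq z n - gauss_seq z k0 + gauss_seq z k0)%C with (gauss_seq z n) in H2 by ring.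
  pose proof (Cmod_ge_0 (gauss_seq z k0)). nra.
Qed.

Lemma gamma_cv (z : C) : cvC (gauss_seq z) (Gamma z).
Proof.
  destruct (gauss_est (Cmod z) (Cmod_ge_0 z)) as [k0 [Hk1 [Hk2 H]]].
  destruct (gauss_bounded z) as [B [k1 HB]].
  assert (HC : 0 <= Cst (Cmod z)) by (unfold Cst; pose proof (pow2_ge_0 (Cmod z)); pose proof (Cmod_ge_0 z); nra).
  destruct (cauchy_cvC (gauss_seq z)) as [L HL].
  - intros eps Heps.
    destruct (nat_large ((4 * (Rabs B + 1) * (Cst (Cmod z) + 1)) / eps + INR k0 + INR k1 + 1)) as [N HN].
    assert (HN0 : (k0 <= N)%nat) by (apply INR_le; pose proof (pos_INR k1); assert (0 <= 4 * (Rabs B + 1) * (Cst (Cmod z) + 1) / eps) by (apply Rle_mult_inv_pos; [pose proof (Rabs_pos B); nra|lra]); lra).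
    assert (HN1 : (k1 <= N)%nat) by (apply INR_le; pose proof (pos_INR k0); assert (0 <= 4 * (Rabs B + 1) * (Cst (Cmod z) + 1) / eps) by (apply Rle_mult_inv_pos; [pose proof (Rabs_pos B); nra|lra]); lra).
    exists N. intros n m Hn Hm.
    destruct (H z (Rle_refl _) N n HN0 Hn) as [Hn1 _].
    destruct (H z (Rle_refl _) N m HN0 Hm) as [Hm1 _].
    pose proof (HB N HN1).
    assert (HNp : 0 < INR N) by (pose proof (pos_INR k0); apply lt_INR in HN0 || idtac; assert (1 <= INR k0) by (apply (le_INR 1); auto); apply le_INR in HN0; lra).
    assert (Hk : 2 * Cst (Cmod z) / INR N * (Rabs B + 1) * 2 < eps).
    { assert (4 * (Rabs B + 1) * (Cst (Cmod z) + 1) / eps < INR N) by (pose proof (pos_INR k0); pose proof (pos_INR k1); lra).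
      apply (Rmult_lt_compat_r eps) in H1; [|lra].
      unfold Rdiv in H1. rewrite Rmult_assoc, Rinv_l, Rmult_1_r in H1 by lra.
      apply (Rmult_lt_reg_r (INR N)); [lra|]. unfold Rdiv. 
      replace (2 * Cst (Cmod z) * / INR N * (Rabs B + 1) * 2 * INR N) with (4 * (Rabs B + 1) * Cst (Cmod z)) by (field; lra).
      pose proof (Rabs_pos B). nra. }
    replace (gauss_seq z n - gauss_seq z m)%C with ((gauss_seq z n - gauss_seq z N) - (gauss_seq z m - gauss_seq z N))%C by ring.
    eapply Rle_lt_trans. { unfold Cminus at 1. eapply Rle_trans; [apply Cmod_triangle|]. rewrite Cmod_opp. apply Rle_refl. }
    assert (Cmod (gauss_seq z N) <= Rabs B + 1) by (pose proof (Rle_abs B); lra).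
    assert (0 <= 2 * Cst (Cmod z) / INR N) by (apply Rle_mult_inv_pos; lra).
    assert (Cmod (gauss_seq z N) * (2 * Cst (Cmod z) / INR N) <= (Rabs B + 1) * (2 * Cst (Cmod z) / INR N)) by (apply Rmult_le_compat_r; lra).
    lra.
  - pose proof (cvC_lim _ _ HL). unfold Gamma. rewrite H0. exact HL.
Qed.

Lemma cv_le_limit (s : nat -> C) (L : C) (a : C) (b : R) (N0 : nat) : cvC s L ->
  (forall n, (N0 <= n)%nat -> Cmod (s n - a) <= b) -> Cmod (L - a) <= b.
Proof.
  intros H Hb. apply Rnot_lt_le. intro Hlt.
  destruct (H (Cmod (L - a) - b) ltac:(lra)) as [N HN].
  pose proof (HN (max N N0) ltac:(lia)). pose proof (Hb (max N N0) ltac:(lia)).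
  pose proof (Cmod_triangle (L - s (max N N0)) (s (max N N0) - a)).
  replace (L - s (max N N0) + (s (max N N0) - a))%C with (L - a)%C in H2 by ring.
  rewrite Cmod_minus_sym in H0. lra.
Qed.

Lemma cv_ge_limit (s : nat -> C) (L : C) (b : R) (N0 : nat) : cvC s L ->
  (forall n, (N0 <= n)%nat -> b <= Cmod (s n)) -> b <= Cmod L.
Proof.
  intros H Hb. apply Rnot_lt_le. intro Hlt.
  destruct (H (b - Cmod L) ltac:(lra)) as [N HN].
  pose proof (HN (max N N0) ltac:(lia)). pose proof (Hb (max N N0) ltac:(lia)).
  pose proof (Cmod_triangle (s (max N N0) - L) L).
  replace (s (max N N0) - L + L)%C with (s (max N N0)) in H2 by ring. lra.
Qed.

Lemma gamma_bounds (R0 : R) : 0 <= R0 -> exists k0 : nat, (1 <= k0)%nat /\ 2 * Cst R0 + 1 <= INR k0 /\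
  forall z, Cmod z <= R0 -> forall N, (k0 <= N)%nat ->
    Cmod (Gamma z - gauss_seq z N) <= Cmod (gauss_seq z N) * (2 * Cst R0 / INR N)
    /\ Cmod (gauss_seq z N) * exp (-1) <= Cmod (Gamma z).
Proof.
  intro HR. destruct (gauss_est R0 HR) as [k0 [Hk1 [Hk2 H]]].
  exists k0. split; [auto|]. split; [auto|]. intros z Hz N HN. split.
  - apply (cv_le_limit (gauss_seq z) _ _ _ N (gamma_cv z)).
    intros n Hn. apply (H z Hz N n HN Hn).
  - apply (cv_ge_limit (gauss_seq z) _ _ N (gamma_cv z)).
    intros n Hn. apply (H z Hz N n HN Hn).
Qed.

Lemma Cmult_integral (a b : C) : (a * b)%C = RtoC 0 -> a = RtoC 0 \/ b = RtoC 0.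
Proof.
  intro H. destruct (Ceq_dec a 0); [left; auto|]. destruct (Ceq_dec b 0); [right; auto|].
  exfalso. apply (Cmult_neq_0 a b); auto.
Qed.

Lemma poch_nonzero (z : C) (N : nat) : 0 < Re z -> poch_prod z N <> RtoC 0.
Proof.
  intro H. induction N.
  - simpl. intro E. rewrite E in H. simpl in H. lra.
  - rewrite poch_S. intro E. apply Cmult_integral in E. destruct E as [E|E]; [auto|].
    assert (Re (z + RtoC (INR (S N)))%C = 0) by (rewrite E; reflexivity).
    unfold Re, Cplus, RtoC in H0. cbn [fst] in H0. pose proof (pos_INR (S N)). unfold Re in H. lra.
Qed.

Lemma gauss_nonzero (z : C) (N : nat) : poch_prod z N <> RtoC 0 -> gauss_seq z N <> RtoC 0.
Proof.
  intro H. unfold gauss_seq. intro E.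
  assert (HF : RtoC (INR (fact N)) <> RtoC 0).
  { intro E2. apply RtoC_inj in E2. pose proof (lt_0_INR _ (lt_O_fact N)). lra. }
  pose proof (cpow_neq0 (INR N) z).
  assert (Cinv (poch_prod z N) <> RtoC 0).
  { intro E2. assert ((poch_prod z N * / poch_prod z N)%C = RtoC 0) by (rewrite E2; ring).
    rewrite Cinv_r in H1 by auto. apply RtoC_inj in H1. lra. }
  unfold Cdiv in E. apply Cmult_integral in E. destruct E as [E|E]; auto.
  apply Cmult_integral in E. destruct E; auto.
Qed.

Lemma Gamma_nonzero_gen (z : C) : (forall N, poch_prod z N <> RtoC 0) -> Gamma z <> RtoC 0.
Proof.
  intros Hp E. destruct (gamma_bounds (Cmod z) (Cmod_ge_0 z)) as [k0 [_ [_ H]]].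
  destruct (H z (Rle_refl _) k0 (Nat.le_refl _)) as [_ H2].
  rewrite E, Cmod_0 in H2. pose proof (gauss_nonzero z k0 (Hp k0)).
  assert (0 < Cmod (gauss_seq z k0)) by (apply Cmod_gt_0; auto).
  pose proof (exp_pos (-1)). nra.
Qed.

Lemma Gamma_nonzero (z : C) : 0 < Re z -> Gamma z <> RtoC 0.
Proof. intro H. apply Gamma_nonzero_gen. intro N. apply poch_nonzero; auto. Qed.

Definition nonpole (z : C) := forall j : nat, (z + RtoC (INR j))%C <> RtoC 0.

Lemma poch_nonpole (z : C) (N : nat) : nonpole z -> poch_prod z N <> RtoC 0.
Proof.
  intro H. induction N.
  - simpl. intro E. apply (H 0%nat). rewrite E. apply C_ext; simpl; ring.
  - rewrite poch_S. apply Cmult_neq_0; auto.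
Qed.

Lemma nonpole_shift (z : C) : nonpole z -> nonpole (z + 1)%C.
Proof.
  intros H j E. apply (H (S j)). rewrite <- E. rewrite S_INR.
  apply C_ext; simpl; ring.
Qed.

Lemma poch_shift (z : C) (N : nat) : (z * poch_prod (z + 1) N = poch_prod z N * (z + RtoC (INR (S N))))%C.
Proof.
  induction N.
  - simpl. apply C_ext; simpl; ring.
  - rewrite !poch_S. 
    replace (z * (poch_prod (z + 1) N * (z + 1 + RtoC (INR (S N)))))%C
      with ((z * poch_prod (z + 1) N) * (z + 1 + RtoC (INR (S N))))%C by ring.
    rewrite IHN. rewrite (S_INR (S N)). 
    apply C_ext; simpl; ring.
Qed.

Lemma gauss_shift (z : C) (N : nat) : nonpole z -> (1 <= N)%nat ->
  gauss_seq (z + 1) N = (z * gauss_seq z N * (RtoC (INR N) / (z + RtoC (INR (S N)))))%C.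
Proof.
  intros Hz HN. unfold gauss_seq.
  assert (HNp : 0 < INR N) by (apply lt_0_INR; lia).
  rewrite cpow_add, cpow_one by auto.
  pose proof (poch_shift z N) as Hs.
  assert (Hp : poch_prod z N <> RtoC 0) by (apply poch_nonpole; auto).
  assert (Hp1 : poch_prod (z + 1) N <> RtoC 0) by (apply poch_nonpole, nonpole_shift; auto).
  assert (Hz0 : z <> RtoC 0) by (intro E; apply (Hz 0%nat); rewrite E; apply C_ext; simpl; ring).
  assert (HzN : (z + RtoC (INR (S N)))%C <> RtoC 0) by apply Hz.
  assert (E : poch_prod (z + 1) N = (poch_prod z N * (z + RtoC (INR (S N))) / z)%C).
  { rewrite <- Hs. field. auto. }
  rewrite E. field. repeat split; auto.
Qed.

Lemma Gamma_rec (z : C) : nonpole z -> Gamma (z + 1)%C = (z * Gamma z)%C.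
Proof.
  intro Hz.
  apply (cvC_unique (gauss_seq (z + 1))); [apply gamma_cv|].
  apply (cvC_close (fun n => z * gauss_seq z n)%C); [apply cvC_scal, gamma_cv|].
  intros eps Heps.
  destruct (gauss_bounded z) as [B [k1 HB]].
  set (A := Cmod z * (Rabs B + 1) * Cmod (z + 1)).
  assert (HA : 0 <= A) by (unfold A; pose proof (Cmod_ge_0 z); pose proof (Cmod_ge_0 (z+1)); pose proof (Rabs_pos B); apply Rmult_le_pos; [apply Rmult_le_pos|]; lra).
  destruct (nat_large (A / eps + Cmod z + INR k1 + 2)) as [N HN].
  assert (0 <= A / eps) by (apply Rle_mult_inv_pos; lra).
  exists N. intros n Hn.
  assert (Hn' : INR N <= INR n) by (apply le_INR; auto).
  assert (Hk1 : (k1 <= n)%nat) by (apply INR_le; pose proof (pos_INR k1); pose proof (Cmod_ge_0 z); lra).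
  assert (H1 : (1 <= n)%nat) by (apply INR_le; simpl; pose proof (pos_INR k1); pose proof (Cmod_ge_0 z); lra).
  rewrite gauss_shift by auto.
  assert (HzN : (z + RtoC (INR (S n)))%C <> RtoC 0) by apply Hz.
  replace (z * gauss_seq z n * (RtoC (INR n) / (z + RtoC (INR (S n)))) - z * gauss_seq z n)%C
    with (- (z * gauss_seq z n * (z + 1) / (z + RtoC (INR (S n)))))%C.
  2:{ assert (ES: RtoC (INR n) = ((z + RtoC (INR (S n))) - (z + 1))%C) by (rewrite S_INR, RtoC_plus; ring).
       rewrite ES. field. auto. }
  rewrite Cmod_opp. unfold Cdiv. rewrite !Cmod_mult, Cmod_inv by auto.
  assert (Hden : INR n + 1 - Cmod z <= Cmod (z + RtoC (INR (S n)))).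
  { pose proof (Cmod_triangle (z + RtoC (INR (S n))) (- z)).
    replace (z + RtoC (INR (S n)) + - z)%C with (RtoC (INR (S n))) in H0 by ring.
    rewrite Cmod_opp, Cmod_R, Rabs_pos_eq in H0 by apply pos_INR. pose proof (S_INR n). lra. }
  pose proof (HB n Hk1).
  assert (Hg : Cmod (gauss_seq z n) <= Rabs B + 1) by (pose proof (Rle_abs B); lra).
  assert (Hpos : 0 < INR n + 1 - Cmod z) by (pose proof (pos_INR k1); lra).
  apply Rle_lt_trans with (A / (INR n + 1 - Cmod z)).
  - unfold A, Rdiv. 
    replace (Cmod z * Cmod (gauss_seq z n) * Cmod (z + 1) * / Cmod (z + RtoC (INR (S n))))
      with ((Cmod z * Cmod (gauss_seq z n) * Cmod (z + 1)) * / Cmod (z + RtoC (INR (S n)))) by ring.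
    apply Rmult_le_compat.
    + pose proof (Cmod_ge_0 z); pose proof (Cmod_ge_0 (gauss_seq z n)); pose proof (Cmod_ge_0 (z + 1)).
      apply Rmult_le_pos; [apply Rmult_le_pos|]; lra.
    + apply Rlt_le, Rinv_0_lt_compat. lra.
    + pose proof (Cmod_ge_0 z); pose proof (Cmod_ge_0 (gauss_seq z n)); pose proof (Cmod_ge_0 (z + 1)).
      apply Rmult_le_compat_r; auto. apply Rmult_le_compat_l; auto.
    + apply Rinv_le_contravar; lra.
  - apply (Rmult_lt_reg_r (INR n + 1 - Cmod z)); [lra|].
    unfold Rdiv. rewrite Rmult_assoc, Rinv_l by lra. rewrite Rmult_1_r.
    assert (A / eps < INR n + 1 - Cmod z) by (pose proof (pos_INR k1); lra).
    apply (Rmult_lt_compat_r eps) in H2; [|lra]. unfold Rdiv in H2.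
    rewrite Rmult_assoc, Rinv_l, Rmult_1_r in H2 by lra. lra.
Qed.

Lemma nonpole_plus_nat (z : C) (m : nat) : nonpole z -> nonpole (z + RtoC (INR m))%C.
Proof.
  intros H j E. apply (H (m + j)%nat). rewrite <- E. rewrite plus_INR, RtoC_plus. ring.
Qed.

Lemma Gamma_shift (z : C) (m : nat) : nonpole z ->
  Gamma (z + RtoC (INR (S m)))%C = (Gamma z * poch_prod z m)%C.
Proof.
  intro Hz. induction m.
  - simpl. replace (z + RtoC 1)%C with (z + 1)%C by reflexivity. rewrite Gamma_rec by auto. ring.
  - replace (z + RtoC (INR (S (S m))))%C with ((z + RtoC (INR (S m))) + 1)%C
      by (rewrite (S_INR (S m)), RtoC_plus; ring).
    rewrite Gamma_rec by (apply nonpole_plus_nat; auto).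
    rewrite IHm, poch_S. ring.
Qed.

Definition ccont (f : R -> C) (t0 : R) :=
  continuity_pt (fun t => fst (f t)) t0 /\ continuity_pt (fun t => snd (f t)) t0.

Lemma cont_eps (g : R -> R) (t0 : R) : continuity_pt g t0 ->
  forall eps, 0 < eps -> exists del, 0 < del /\ forall t, Rabs (t - t0) < del -> Rabs (g t - g t0) < eps.
Proof.
  intros H eps Heps. destruct (H eps Heps) as [del [Hd Ht]].
  exists del. split; auto. intros t Htt.
  destruct (Req_dec t t0) as [E|E].
  - subst. rewrite Rminus_diag, Rabs_R0. auto.
  - apply (Ht t). split; [split; [exact I| auto]|]. exact Htt.
Qed.

Lemma ccont_eps (f : R -> C) (t0 : R) : ccont f t0 ->
  forall eps, 0 < eps -> exists del, 0 < del /\ forall t, Rabs (t - t0) < del -> Cmod (f t - f t0) < eps.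
Proof.
  intros [H1 H2] eps Heps.
  destruct (cont_eps _ _ H1 (eps/2) ltac:(lra)) as [d1 [Hd1 P1]].
  destruct (cont_eps _ _ H2 (eps/2) ltac:(lra)) as [d2 [Hd2 P2]].
  exists (Rmin d1 d2). split; [apply Rmin_pos; auto|]. intros t Ht.
  eapply Rle_lt_trans; [apply Cmod_le_re_im|].
  pose proof (P1 t ltac:(pose proof (Rmin_l d1 d2); lra)).
  pose proof (P2 t ltac:(pose proof (Rmin_r d1 d2); lra)).
  destruct (f t), (f t0). simpl in *. unfold Rminus in *. lra.
Qed.

Lemma cpt_id (t0 : R) : continuity_pt (fun t => t) t0.
Proof. apply derivable_continuous_pt, derivable_pt_id. Qed.

Lemma cpt_const (c t0 : R) : continuity_pt (fun _ => c) t0.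
Proof. apply continuity_pt_const. intros x y. reflexivity. Qed.

Lemma cpt_plus (f g : R -> R) t0 : continuity_pt f t0 -> continuity_pt g t0 -> continuity_pt (fun t => f t + g t) t0.
Proof. intros. apply (continuity_pt_plus f g); auto. Qed.

Lemma cpt_minus (f g : R -> R) t0 : continuity_pt f t0 -> continuity_pt g t0 -> continuity_pt (fun t => f t - g t) t0.
Proof. intros. apply (continuity_pt_minus f g); auto. Qed.

Lemma cpt_mult (f g : R -> R) t0 : continuity_pt f t0 -> continuity_pt g t0 -> continuity_pt (fun t => f t * g t) t0.
Proof. intros. apply (continuity_pt_mult f g); auto. Qed.

Lemma cpt_div (f g : R -> R) t0 : continuity_pt f t0 -> continuity_pt g t0 -> g t0 <> 0 -> continuity_pt (fun t => f t / g t) t0.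
Proof. intros. apply (continuity_pt_div f g); auto. Qed.

Lemma cpt_comp (f g : R -> R) t0 : continuity_pt f t0 -> (forall x, continuity_pt g x) -> continuity_pt (fun t => g (f t)) t0.
Proof. intros. apply (continuity_pt_comp f g); auto. Qed.

Lemma cpt_exp (x : R) : continuity_pt exp x.
Proof. apply derivable_continuous_pt, derivable_pt_exp. Qed.

Lemma ccont_pair (f g : R -> R) t0 : continuity_pt f t0 -> continuity_pt g t0 -> ccont (fun t => (f t, g t)) t0.
Proof. intros. split; simpl; auto. Qed.

Lemma ccont_const (c : C) t0 : ccont (fun _ => c) t0.
Proof. split; apply cpt_const. Qed.

Lemma ccont_plus (f g : R -> C) t0 : ccont f t0 -> ccont g t0 -> ccont (fun t => f t + g t)%C t0.
Proof. intros [] []. split; simpl; apply cpt_plus; auto. Qed.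

Lemma ccont_mult (f g : R -> C) t0 : ccont f t0 -> ccont g t0 -> ccont (fun t => f t * g t)%C t0.
Proof.
  intros [] []. split; simpl.
  - apply cpt_minus; apply cpt_mult; auto.
  - apply cpt_plus; apply cpt_mult; auto.
Qed.

Lemma ccont_inv (f : R -> C) t0 : ccont f t0 -> f t0 <> RtoC 0 -> ccont (fun t => / f t)%C t0.
Proof.
  intros [H1 H2] Hn.
  assert (Hd : fst (f t0) ^ 2 + snd (f t0) ^ 2 <> 0).
  { intro E. apply Hn. destruct (f t0) as [a b]. simpl in E.
    assert (a = 0) by nra. assert (b = 0) by nra. subst. reflexivity. }
  split; simpl.
  - apply cpt_div; auto. apply cpt_plus; apply cpt_mult; try apply cpt_mult; auto; apply cpt_const.
  - apply cpt_div; auto. 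
    + apply (continuity_pt_opp (fun t => snd (f t))); auto.
    + apply cpt_plus; apply cpt_mult; try apply cpt_mult; auto; apply cpt_const.
Qed.

Lemma ccont_cexp (f : R -> C) t0 : ccont f t0 -> ccont (fun t => cexp (f t)) t0.
Proof.
  intros [H1 H2]. unfold cexp. unfold Re, Im. split; simpl;
  [apply cpt_minus| apply cpt_plus]; apply cpt_mult;
  first [ apply cpt_const
        | apply (cpt_comp (fun t => fst (f t)) exp); [exact H1| apply cpt_exp]
        | apply (cpt_comp (fun t => snd (f t)) cos); [exact H2| apply continuity_cos]
        | apply (cpt_comp (fun t => snd (f t)) sin); [exact H2| apply continuity_sin] ].
Qed.

Lemma ccont_poch (f : R -> C) t0 N : ccont f t0 -> ccont (fun t => poch_prod (f t) N) t0.
Proof.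
  intro H. induction N.
  - simpl. auto.
  - apply (ccont_mult (fun t => poch_prod (f t) N) (fun t => f t + RtoC (INR (S N)))%C); auto.
    apply ccont_plus; auto. apply ccont_const.
Qed.

Lemma ccont_cpow (a : R) (f : R -> C) t0 : ccont f t0 -> ccont (fun t => cpow a (f t)) t0.
Proof. intro H. unfold cpow. apply ccont_cexp. apply ccont_mult; auto. apply ccont_const. Qed.

Lemma ccont_gauss (f : R -> C) t0 N : ccont f t0 -> poch_prod (f t0) N <> RtoC 0 ->
  ccont (fun t => gauss_seq (f t) N) t0.
Proof.
  intros H Hp. unfold gauss_seq, Cdiv.
  apply ccont_mult; [apply ccont_mult; [apply ccont_const| apply ccont_cpow; auto]|].
  apply ccont_inv; auto. apply ccont_poch; auto.
Qed.

Lemma Gamma_cont (f : R -> C) (t0 : R) : ccont f t0 -> (forall N, poch_prod (f t0) N <> RtoC 0) ->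
  forall eps, 0 < eps -> exists del, 0 < del /\ forall t, Rabs (t - t0) < del ->
    Cmod (Gamma (f t) - Gamma (f t0)) < eps.
Proof.
  intros Hf Hp eps Heps.
  set (R0 := Cmod (f t0) + 1).
  assert (HR0 : 0 <= R0) by (unfold R0; pose proof (Cmod_ge_0 (f t0)); lra).
  destruct (gamma_bounds R0 HR0) as [k0 [Hk1 [Hk2 HG]]].
  assert (HC : 0 <= Cst R0) by (unfold Cst; pose proof (pow2_ge_0 R0); nra).
  set (B := 3 * Cmod (Gamma (f t0)) + 1).
  assert (HB : 1 <= B) by (unfold B; pose proof (Cmod_ge_0 (Gamma (f t0))); lra).
  destruct (nat_large (8 * Cst R0 * B / eps + INR k0 + 1)) as [N HN].
  assert (0 <= 8 * Cst R0 * B / eps) by (apply Rle_mult_inv_pos; [nra|lra]).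
  assert (HkN : (k0 <= N)%nat) by (apply INR_le; lra).
  assert (HNp : 0 < INR N) by (assert (1 <= INR k0) by (apply (le_INR 1); auto); lra).
  set (c := 2 * Cst R0 / INR N).
  assert (Hc0 : 0 <= c) by (unfold c; apply Rle_mult_inv_pos; lra).
  assert (Hc : 2 * B * c < eps / 2).
  { unfold c. apply (Rmult_lt_reg_r (INR N)); [lra|].
    replace (2 * B * (2 * Cst R0 / INR N) * INR N) with (4 * Cst R0 * B) by (field; lra).
    assert (8 * Cst R0 * B / eps < INR N) by lra.
    apply (Rmult_lt_compat_r eps) in H0; [|lra]. unfold Rdiv in H0.
    rewrite Rmult_assoc, Rinv_l, Rmult_1_r in H0 by lra. nra. }
  assert (Hw0 : Cmod (f t0) <= R0) by (unfold R0; lra).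
  destruct (HG (f t0) Hw0 N HkN) as [E0 L0].
  assert (HG0 : Cmod (gauss_seq (f t0) N) <= B - 1).
  { unfold B. pose proof (exp_pos (-1)). 
    assert (exp (-1) * exp 1 = 1) by (rewrite <- exp_plus; replace (-1 + 1) with 0 by ring; apply exp_0).
    assert (exp 1 <= 3) by (pose proof exp_le_3; lra).
    pose proof (Cmod_ge_0 (gauss_seq (f t0) N)).
    apply Rle_trans with (Cmod (gauss_seq (f t0) N) * exp (-1) * exp 1).
    - rewrite Rmult_assoc, H1. lra.
    - pose proof (exp_pos 1). pose proof (Cmod_ge_0 (Gamma (f t0))).
      apply Rle_trans with (Cmod (Gamma (f t0)) * exp 1); [apply Rmult_le_compat_r; lra| nra]. }
  destruct (ccont_eps _ _ (ccont_gauss f t0 N Hf (Hp N)) (Rmin 1 (eps/2)) ltac:(apply Rmin_pos; lra)) as [d1 [Hd1 P1]].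
  destruct (ccont_eps _ _ Hf 1 ltac:(lra)) as [d2 [Hd2 P2]].
  exists (Rmin d1 d2). split; [apply Rmin_pos; auto|]. intros t Ht.
  pose proof (P1 t ltac:(pose proof (Rmin_l d1 d2); lra)) as Q1.
  pose proof (P2 t ltac:(pose proof (Rmin_r d1 d2); lra)) as Q2.
  assert (Hw : Cmod (f t) <= R0).
  { unfold R0. pose proof (Cmod_triangle (f t - f t0) (f t0)).
    replace (f t - f t0 + f t0)%C with (f t) in H0 by ring. lra. }
  destruct (HG (f t) Hw N HkN) as [E1 _].
  assert (Hgt : Cmod (gauss_seq (f t) N) <= B).
  { pose proof (Cmod_triangle (gauss_seq (f t) N - gauss_seq (f t0) N) (gauss_seq (f t0) N)).
    replace (gauss_seq (f t) N - gauss_seq (f t0) N + gauss_seq (f t0) N)%C with (gauss_seq (f t) N) in H0 by ring.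
    pose proof (Rmin_l 1 (eps/2)). lra. }
  fold c in E0, E1.
  replace (Gamma (f t) - Gamma (f t0))%C with
    ((Gamma (f t) - gauss_seq (f t) N) + (gauss_seq (f t) N - gauss_seq (f t0) N) - (Gamma (f t0) - gauss_seq (f t0) N))%C by ring.
  unfold Cminus at 1.
  eapply Rle_lt_trans; [apply Cmod_triangle|]. rewrite Cmod_opp.
  eapply Rle_lt_trans; [apply Rplus_le_compat_r, Cmod_triangle|].
  assert (Cmod (gauss_seq (f t) N) * c <= B * c) by (apply Rmult_le_compat_r; lra).
  assert (Cmod (gauss_seq (f t0) N) * c <= B * c) by (apply Rmult_le_compat_r; lra).
  pose proof (Rmin_r 1 (eps/2)). lra.
Qed.

Fixpoint pp (x y : R) (N : nat) : R :=
  match N with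
  | O => x ^ 2 + y ^ 2
  | S m => pp x y m * ((x + INR (S m)) ^ 2 + y ^ 2)
  end.

Definition gg (y t : R) := 1 + y ^ 2 / t ^ 2.

Fixpoint pg (x y : R) (N : nat) : R :=
  match N with
  | O => gg y x
  | S m => pg x y m * gg y (x + INR (S m))
  end.

Lemma sq_gt0 (x : R) : x <> 0 -> 0 < x ^ 2.
Proof. intro H. replace (x^2) with (x*x) by ring. destruct (Rtotal_order x 0) as [h|[h|h]]; [nra|contradiction|nra]. Qed.

Lemma sq_pos (x : R) : 0 < x -> 0 < x ^ 2.
Proof. intro H. apply sq_gt0. lra. Qed.

Lemma Cmod_sq_pair (a b : R) : Cmod (a, b) ^ 2 = a ^ 2 + b ^ 2.
Proof. unfold Cmod; cbn [fst snd]. rewrite pow2_sqrt; [ring| nra]. Qed.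

Lemma Cmod_poch_sq (x y : R) (N : nat) : Cmod (poch_prod (x, y) N) ^ 2 = pp x y N.
Proof.
  induction N.
  - simpl poch_prod. apply Cmod_sq_pair.
  - rewrite poch_S. cbn [pp]. rewrite Cmod_mult, Rpow_mult_distr, IHN.
    f_equal. replace ((x, y) + RtoC (INR (S N)))%C with (x + INR (S N), y) by (apply C_ext; simpl; ring).
    apply Cmod_sq_pair.
Qed.

Lemma pp_pos (x y : R) (N : nat) : 0 < x -> 0 < pp x y N.
Proof.
  intro Hx. induction N; cbn [pp].
  - pose proof (sq_pos x ltac:(lra)); pose proof (pow2_ge_0 y); lra.
  - pose proof (pos_INR (S N)). apply Rmult_lt_0_compat; auto.
    pose proof (sq_pos (x + INR (S N)) ltac:(lra)); pose proof (pow2_ge_0 y); lra.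
Qed.

Lemma Cmod_gauss_sq (x y : R) (N : nat) : 0 < x ->
  Cmod (gauss_seq (x, y) N) ^ 2 * pp x y N = INR (fact N) ^ 2 * exp (x * ln (INR N)) ^ 2.
Proof.
  intro Hx. unfold gauss_seq.
  assert (Hp : poch_prod (x, y) N <> RtoC 0) by (apply poch_nonzero; simpl; auto).
  rewrite Cmod_div by auto. rewrite Cmod_mult, Cmod_R, Cmod_cpow.
  rewrite <- Cmod_poch_sq. simpl Re.
  rewrite Rabs_pos_eq by apply pos_INR.
  assert (0 < Cmod (poch_prod (x, y) N)) by (apply Cmod_gt_0; auto).
  field. lra.
Qed.

Lemma pp_pg (x y : R) (N : nat) : 0 < x -> pp x y N = pp x 0 N * pg x y N.
Proof.
  intro Hx. induction N; cbn [pp]; cbn [pg].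
  - unfold gg. field. lra.
  - rewrite IHN. unfold gg. pose proof (pos_INR (S N)). field. 
    assert (0 < x + INR (S N)) by lra. lra.
Qed.

Lemma gg_ge1 (y t : R) : t <> 0 -> 1 <= gg y t.
Proof. intro. unfold gg. assert (0 <= y^2/t^2) by (apply Rle_mult_inv_pos; [nra| apply sq_gt0; auto]). lra. Qed.

Lemma gg_le2 (y t : R) : y ^ 2 <= t ^ 2 -> t <> 0 -> gg y t <= 2.
Proof.
  intros H Ht. unfold gg. assert (0 < t^2) by (apply sq_gt0; auto).
  assert (y^2/t^2 <= 1). { apply (Rmult_le_reg_r (t^2)); auto. unfold Rdiv. rewrite Rmult_assoc, Rinv_l by lra. lra. }
  lra.
Qed.

Lemma pg_pos (x y : R) (N : nat) : 0 < x -> 0 < pg x y N.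
Proof.
  intro Hx. induction N; cbn [pg].
  - pose proof (gg_ge1 y x ltac:(lra)); lra.
  - pose proof (pos_INR (S N)). pose proof (gg_ge1 y (x + INR (S N)) ltac:(lra)). nra.
Qed.

Lemma gg_conv (y t : R) : 1 <= t -> gg y t ^ 2 <= gg y (t - 1/2) * gg y (t + 1/2).
Proof.
  intro Ht. unfold gg. set (a := t - 1/2). set (b := t + 1/2). set (Y := y^2).
  assert (Ha : 0 < a) by (unfold a; lra). assert (Hb : 0 < b) by (unfold b; lra).
  assert (HY : 0 <= Y) by (unfold Y; nra).
  assert (Et : t = (a + b) / 2) by (unfold a, b; field).
  assert (H1 : 2 / t^2 <= 1/a^2 + 1/b^2).
  { rewrite Et. 
    assert (E : 1/a^2 + 1/b^2 - 2/((a+b)/2)^2 = ((a-b)^2 * (a^2 + b^2 + 4*a*b)) / (a^2 * b^2 * (a+b)^2)) by (field; lra).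
    assert (0 <= ((a-b)^2 * (a^2 + b^2 + 4*a*b)) / (a^2 * b^2 * (a+b)^2)).
    { apply Rle_mult_inv_pos. pose proof (pow2_ge_0 (a-b)). assert (0 < a*b) by nra. nra.
      apply Rmult_lt_0_compat; [apply Rmult_lt_0_compat|]; apply sq_gt0; lra. }
    lra. }
  assert (H2 : 1 / t^4 <= 1 / (a^2 * b^2)).
  { apply Rmult_le_compat_l; [lra|]. apply Rinv_le_contravar.
    - apply Rmult_lt_0_compat; apply sq_gt0; lra.
    - assert (a * b <= t^2) by (unfold a, b; nra). assert (0 < a*b) by nra.
      replace (t^4) with (t^2 * t^2) by ring. replace (a^2*b^2) with ((a*b)*(a*b)) by ring. nra. }
  assert (E1 : (1 + Y / t^2)^2 = 1 + Y * (2 / t^2) + Y^2 * (1/t^4)) by (field; lra).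
  assert (E2 : (1 + Y / a^2) * (1 + Y / b^2) = 1 + Y * (1/a^2 + 1/b^2) + Y^2 * (1/(a^2*b^2))) by (field; lra).
  rewrite E1, E2.
  assert (Y * (2 / t^2) <= Y * (1/a^2 + 1/b^2)) by (apply Rmult_le_compat_l; auto).
  assert (Y^2 * (1/t^4) <= Y^2 * (1/(a^2*b^2))) by (apply Rmult_le_compat_l; [nra|auto]).
  lra.
Qed.

Lemma pg_conv (x y : R) (N : nat) : 1 <= x -> pg x y N ^ 2 <= pg (x - 1/2) y N * pg (x + 1/2) y N.
Proof.
  intro Hx. induction N; cbn [pg].
  - apply gg_conv; auto.
  - pose proof (pos_INR (S N)).
    pose proof (gg_conv y (x + INR (S N)) ltac:(lra)).
    replace (x - 1/2 + INR (S N)) with (x + INR (S N) - 1/2) by ring.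
    replace (x + 1/2 + INR (S N)) with (x + INR (S N) + 1/2) by ring.
    pose proof (pg_pos x y N ltac:(lra)).
    pose proof (gg_ge1 y (x + INR (S N)) ltac:(lra)).
    rewrite Rpow_mult_distr.
    replace (pg (x - 1 / 2) y N * gg y (x + INR (S N) - 1 / 2) * (pg (x + 1 / 2) y N * gg y (x + INR (S N) + 1 / 2)))
      with ((pg (x - 1 / 2) y N * pg (x + 1 / 2) y N) * (gg y (x + INR (S N) - 1 / 2) * gg y (x + INR (S N) + 1 / 2))) by ring.
    apply Rmult_le_compat; auto; apply pow2_ge_0.
Qed.

Lemma pg_shift (x y : R) (N : nat) : 0 < x -> pg (x + 1) y N * gg y x = pg x y N * gg y (x + INR (S N)).
Proof.
  intro Hx. induction N; cbn [pg].
  - simpl INR. ring.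
  - replace (x + 1 + INR (S N)) with (x + INR (S (S N))) by (rewrite (S_INR (S N)); ring).
    replace (pg (x + 1) y N * gg y (x + INR (S (S N))) * gg y x) with ((pg (x + 1) y N * gg y x) * gg y (x + INR (S (S N)))) by ring.
    rewrite IHN. ring.
Qed.

Lemma pg_double (y : R) (N : nat) : pg 1 (2 * y) (2 * N) * gg y (INR N + 1) = pg (1/2) y N * pg 1 y N.
Proof.
  induction N.
  - change (2 * 0)%nat with 0%nat. cbn [pg]. simpl INR. unfold gg. field.
  - replace (2 * S N)%nat with (S (S (2 * N))) by lia.
    cbn [pg].
    assert (E1 : gg (2 * y) (1 + INR (S (2 * N))) = gg y (INR N + 1)).
    { unfold gg. rewrite S_INR, mult_INR. simpl INR. field. pose proof (pos_INR N). lra. }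
    assert (E2 : gg (2 * y) (1 + INR (S (S (2 * N)))) = gg y (1/2 + INR (S N))).
    { unfold gg. rewrite !S_INR, mult_INR. simpl INR. field. pose proof (pos_INR N). lra. }
    rewrite E1, E2.
    replace (1 + INR (S N)) with (INR (S N) + 1) by ring.
    replace (pg 1 (2 * y) (2 * N) * gg y (INR N + 1) * gg y (1 / 2 + INR (S N)) * gg y (INR (S N) + 1))
      with ((pg 1 (2 * y) (2 * N) * gg y (INR N + 1)) * gg y (1 / 2 + INR (S N)) * gg y (INR (S N) + 1)) by ring.
    rewrite IHN. ring.
Qed.

Lemma ratio_bounds (y : R) (N : nat) : y ^ 2 <= (INR N + 1) ^ 2 ->
  let p := pg (1/2) y N in let q := pg 1 y N in
  / (32 * (1 + y ^ 2)) <= ((q / p) * gg y (INR N + 1)) ^ 2 <= 8 / (1 + y ^ 2) /\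
  (1 + y ^ 2) / 2 <= ((p / q) * gg y (INR N + 1)) ^ 2 <= 128 * (1 + y ^ 2).
Proof.
  intros Hy p q.
  pose proof (pos_INR N) as HN.
  set (r := pg (3/2) y N). set (s := pg 2 y N).
  assert (C1 : q ^ 2 <= p * r).
  { unfold q, p, r. pose proof (pg_conv 1 y N ltac:(lra)) as H.
    replace (1 - 1/2) with (1/2) in H by field. replace (1 + 1/2) with (3/2) in H by field. exact H. }
  assert (C2 : r ^ 2 <= q * s).
  { unfold q, r, s. pose proof (pg_conv (3/2) y N ltac:(lra)) as H.
    replace (3/2 - 1/2) with 1 in H by field. replace (3/2 + 1/2) with 2 in H by field. exact H. }
  assert (S1 : r * gg y (1/2) = p * gg y (1/2 + INR (S N))).
  { unfold r, p. pose proof (pg_shift (1/2) y N ltac:(lra)) as H.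
    replace (1/2 + 1) with (3/2) in H by field. exact H. }
  assert (S2 : s * gg y 1 = q * gg y (1 + INR (S N))).
  { unfold s, q. pose proof (pg_shift 1 y N ltac:(lra)) as H.
    replace (1 + 1) with 2 in H by ring. exact H. }
  rewrite S_INR in S1, S2.
  set (G1 := gg y (1/2 + (INR N + 1))) in *.
  set (G2 := gg y (1 + (INR N + 1))) in *.
  set (G0 := gg y (INR N + 1)).
  assert (HG1 : 1 <= G1 <= 2) by (split; [apply gg_ge1; lra| apply gg_le2; nra]).
  assert (HG2 : 1 <= G2 <= 2) by (split; [apply gg_ge1; lra| apply gg_le2; nra]).
  assert (HG0 : 1 <= G0 <= 2) by (split; [apply gg_ge1; lra| apply gg_le2; nra]).
  assert (Ea : gg y (1/2) = 1 + 4 * y^2) by (unfold gg; field).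
  assert (Eb : gg y 1 = 1 + y^2) by (unfold gg; field).
  rewrite Ea in S1. rewrite Eb in S2.
  set (Y := y ^ 2) in *.
  assert (HY : 0 <= Y) by (unfold Y; apply pow2_ge_0).
  assert (Hp : 0 < p) by (apply pg_pos; lra).
  assert (Hq : 0 < q) by (apply pg_pos; lra).
  assert (Hr : 0 < r) by (apply pg_pos; lra).
  set (a := 1 + 4 * Y) in *. set (b := 1 + Y) in *.
  assert (Ha : 1 <= a) by (unfold a; lra). assert (Hb : 1 <= b) by (unfold b; lra).
  set (X := (q / p) ^ 2).
  assert (HXup : X <= 2 / a).
  { unfold X. assert (Er : r = p * G1 / a) by (apply (Rmult_eq_reg_r a); [rewrite S1; field|]; lra).
    rewrite Er in C1.
    assert (E : (q/p)^2 = q^2 / p^2) by (field; lra). rewrite E.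
    apply (Rmult_le_reg_r (p^2)); [apply sq_pos; lra|].
    replace (q ^ 2 / p ^ 2 * p ^ 2) with (q^2) by (field; lra).
    replace (2 / a * p ^ 2) with (p * (p * 2 / a)) by (field; lra).
    eapply Rle_trans; [apply C1|]. apply Rmult_le_compat_l; [lra|].
    unfold Rdiv. apply Rmult_le_compat_r; [apply Rlt_le, Rinv_0_lt_compat; lra|]. nra. }
  assert (HXlo : b / (2 * a ^ 2) <= X).
  { unfold X. assert (Er : r = p * G1 / a) by (apply (Rmult_eq_reg_r a); [rewrite S1; field|]; lra).
    assert (Es : s = q * G2 / b) by (apply (Rmult_eq_reg_r b); [rewrite S2; field|]; lra).
    rewrite Er, Es in C2.
    assert (E : (q/p)^2 = q^2 / p^2) by (field; lra). rewrite E.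
    assert (H1 : p^2 * G1^2 * b <= q^2 * G2 * a^2).
    { replace (p^2 * G1^2 * b) with ((p * G1 / a)^2 * (a^2 * b)) by (field; lra).
      replace (q^2 * G2 * a^2) with ((q * (q * G2 / b)) * (a^2 * b)) by (field; lra).
      apply Rmult_le_compat_r; [|auto]. apply Rmult_le_pos; [apply pow2_ge_0|lra]. }
    apply (Rmult_le_reg_r (p^2 * (2 * a^2))). { apply Rmult_lt_0_compat; [apply sq_pos; lra| assert (0 < a^2) by (apply sq_pos; lra); lra]. }
    replace (b / (2 * a ^ 2) * (p ^ 2 * (2 * a ^ 2))) with (p^2 * b) by (field; lra).
    replace (q ^ 2 / p ^ 2 * (p ^ 2 * (2 * a ^ 2))) with (2 * q^2 * a^2) by (field; lra).
    assert (p^2 * b <= p^2 * G1^2 * b).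
    { assert (0 <= p^2 * b) by (apply Rmult_le_pos; [apply pow2_ge_0|lra]).
      assert (1 <= G1^2) by nra. nra. }
    assert (q^2 * G2 * a^2 <= 2 * q^2 * a^2).
    { assert (0 <= q^2 * a^2) by (apply Rmult_le_pos; apply pow2_ge_0). nra. }
    lra. }
  assert (HX0 : 0 < X) by (unfold X; apply sq_pos; apply Rdiv_lt_0_compat; lra).
  assert (Hab : b <= a <= 4 * b) by (unfold a, b; lra).
  assert (HG02 : 1 <= G0 ^ 2 <= 4) by nra.
  split.
  - replace ((q / p * G0) ^ 2) with (X * G0^2) by (unfold X; ring).
    split.
    + apply Rle_trans with (b / (2 * a^2)).
      * apply (Rmult_le_reg_r (32 * b * (2 * a^2))). { assert (0 < a^2) by (apply sq_pos; lra). nra. }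
        replace (/ (32 * b) * (32 * b * (2 * a ^ 2))) with (2 * a^2) by (field; lra).
        replace (b / (2 * a ^ 2) * (32 * b * (2 * a ^ 2))) with (32 * b^2) by (field; lra). nra.
      * nra.
    + apply Rle_trans with (2 / a * 4).
      * apply Rmult_le_compat; lra.
      * apply (Rmult_le_reg_r (a * b)); [nra|].
        replace (2 / a * 4 * (a * b)) with (8 * b) by (field; lra).
        replace (8 / b * (a * b)) with (8 * a) by (field; lra). lra.
  - replace ((p / q * G0) ^ 2) with (/ X * G0^2) by (unfold X; field; lra).
    assert (HiX1 : a / 2 <= / X).
    { replace (a / 2) with (/ (2 / a)) by (field; lra). apply Rinv_le_contravar; lra. }
    assert (HiX2 : / X <= 2 * a ^ 2 / b).
    { replace (2 * a^2 / b) with (/ (b / (2 * a^2))) by (field; lra).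
      apply Rinv_le_contravar; auto. apply Rdiv_lt_0_compat; [lra|]. assert (0 < a^2) by (apply sq_pos; lra). lra. }
    split.
    + apply Rle_trans with (a / 2); [lra|]. nra.
    + apply Rle_trans with (2 * a^2 / b * 4).
      * assert (0 < / X) by (apply Rinv_0_lt_compat; lra). apply Rmult_le_compat; lra.
      * apply (Rmult_le_reg_r b); [lra|].
        replace (2 * a ^ 2 / b * 4 * b) with (8 * a^2) by (field; lra).
        assert (a^2 <= 16 * b^2) by nra. nra.
Qed.

Lemma cvC_Cmod (s : nat -> C) (L : C) : cvC s L -> is_lim_seq (fun n => Cmod (s n)) (Cmod L).
Proof.
  intro H. apply is_lim_seq_Reals. intros eps Heps.
  destruct (H eps Heps) as [N HN]. exists N. intros n Hn.
  unfold R_dist. pose proof (HN n ltac:(lia)).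
  apply Rle_lt_trans with (Cmod (s n - L)); auto.
  apply Rabs_le. split.
  - pose proof (Cmod_triangle (L - s n) (s n)). replace (L - s n + s n)%C with L in H1 by ring.
    rewrite Cmod_minus_sym in H1. lra.
  - pose proof (Cmod_triangle (s n - L) L). replace (s n - L + L)%C with (s n) in H1 by ring. lra.
Qed.

Lemma cvC_sub2 (s : nat -> C) (L : C) : cvC s L -> cvC (fun n => s (2 * n)%nat) L.
Proof. intros H eps Heps. destruct (H eps Heps) as [N HN]. exists N. intros n Hn. apply HN. lia. Qed.

Lemma lim_sq_bounds (u v : nat -> R) (L V m M : R) : is_lim_seq u L -> is_lim_seq v V ->
  eventually (fun n => m * v n ^ 2 <= u n ^ 2 <= M * v n ^ 2) -> m * V ^ 2 <= L ^ 2 <= M * V ^ 2.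
Proof.
  intros Hu Hv He.
  assert (Hu2 : is_lim_seq (fun n => u n ^ 2) (L ^ 2)).
  { replace (L^2) with (L * L) by ring. eapply is_lim_seq_ext; [|apply is_lim_seq_mult'; [exact Hu|exact Hu]].
    intro n. simpl. ring. }
  assert (Hv2 : is_lim_seq (fun n => m * v n ^ 2) (m * V ^ 2)).
  { replace (V^2) with (V * V) by ring. eapply is_lim_seq_ext; [|apply is_lim_seq_mult'; [apply is_lim_seq_const|apply is_lim_seq_mult'; [exact Hv|exact Hv]]].
    intro n. simpl. ring. }
  assert (Hv3 : is_lim_seq (fun n => M * v n ^ 2) (M * V ^ 2)).
  { replace (V^2) with (V * V) by ring. eapply is_lim_seq_ext; [|apply is_lim_seq_mult'; [apply is_lim_seq_const|apply is_lim_seq_mult'; [exact Hv|exact Hv]]].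
    intro n. simpl. ring. }
  split.
  - pose proof (is_lim_seq_le_loc _ _ _ _ (filter_imp _ _ (fun n H => proj1 H) He) Hv2 Hu2). simpl in H. exact H.
  - pose proof (is_lim_seq_le_loc _ _ _ _ (filter_imp _ _ (fun n H => proj2 H) He) Hu2 Hv3). simpl in H. exact H.
Qed.

Lemma pg_zero (x : R) (N : nat) : 0 < x -> pg x 0 N = 1.
Proof.
  intro Hx. induction N; cbn [pg]; unfold gg.
  - field. lra.
  - rewrite IHN. pose proof (pos_INR (S N)). field. lra.
Qed.

Lemma Cmod_gauss_pg (x y : R) (N : nat) : 0 < x ->
  Cmod (gauss_seq (x, y) N) ^ 2 = Cmod (gauss_seq (x, 0) N) ^ 2 / pg x y N.
Proof.
  intro Hx. pose proof (Cmod_gauss_sq x y N Hx) as H1. pose proof (Cmod_gauss_sq x 0 N Hx) as H2.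
  rewrite pp_pg in H1 by auto. rewrite pp_pg in H2 by auto. rewrite pg_zero in H2 by auto.
  pose proof (pp_pos x 0 N Hx). pose proof (pg_pos x y N Hx).
  apply (Rmult_eq_reg_r (pp x 0 N * pg x y N)); [|nra].
  rewrite H1. replace (Cmod (gauss_seq (x, 0) N) ^ 2 / pg x y N * (pp x 0 N * pg x y N))
    with (Cmod (gauss_seq (x, 0) N) ^ 2 * (pp x 0 N * 1)) by (field; lra). auto.
Qed.

Definition Dq (x y : R) (N : nat) : R :=
  Cmod (gauss_seq (1, 2 * y) (2 * N)%nat) ^ 2 / (Cmod (gauss_seq (x, y) N) ^ 2) ^ 2.

Definition Dl (x y : R) : R := Cmod (Gamma (1, 2 * y)) ^ 2 / (Cmod (Gamma (x, y)) ^ 2) ^ 2.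

Lemma Dq_lim (x y : R) : 0 < x -> is_lim_seq (Dq x y) (Dl x y).
Proof.
  intro Hx. unfold Dq, Dl.
  assert (Hg : Gamma (x, y) <> RtoC 0) by (apply Gamma_nonzero; simpl; auto).
  pose proof (cvC_Cmod _ _ (cvC_sub2 _ _ (gamma_cv (1, 2 * y)))) as H1.
  pose proof (cvC_Cmod _ _ (gamma_cv (x, y))) as H2.
  assert (Hsq : forall (u : nat -> R) (l : R), is_lim_seq u l -> is_lim_seq (fun n => u n ^ 2) (l ^ 2)).
  { intros u l Hu. replace (l^2) with (l*l) by ring.
    eapply is_lim_seq_ext; [|apply is_lim_seq_mult'; [exact Hu|exact Hu]]. intro n. simpl. ring. }
  apply is_lim_seq_div'.
  - apply Hsq. exact H1.
  - apply Hsq, Hsq. exact H2.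
  - assert (0 < Cmod (Gamma (x, y))) by (apply Cmod_gt_0; auto).
    apply Rgt_not_eq. apply pow_lt. apply pow_lt. auto.
Qed.

Lemma Dq_identity_odd (y : R) (N : nat) :
  Dq 1 y N = Dq 1 0 N * (pg 1 y N / pg (1/2) y N * gg y (INR N + 1)).
Proof.
  unfold Dq. rewrite (Cmod_gauss_pg 1 (2 * y)) by lra. rewrite (Cmod_gauss_pg 1 y) by lra.
  replace (2 * 0) with 0 by ring.
  pose proof (pg_double y N) as Hd.
  pose proof (pg_pos 1 y N ltac:(lra)). pose proof (pg_pos (1/2) y N ltac:(lra)).
  pose proof (pg_pos 1 (2 * y) (2 * N) ltac:(lra)).
  pose proof (gg_ge1 y (INR N + 1) ltac:(pose proof (pos_INR N); lra)).
  assert (E : pg 1 (2 * y) (2 * N) = pg (1/2) y N * pg 1 y N / gg y (INR N + 1)).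
  { rewrite <- Hd. field. lra. }
  rewrite E.
  assert (HG1 : 0 < Cmod (gauss_seq (1, 0) N)).
  { apply Cmod_gt_0. apply gauss_nonzero, poch_nonzero. simpl; lra. }
  field. repeat split; try lra; try (apply Rgt_not_eq, pow_lt; auto).
Qed.

Lemma Dq_identity_even (y : R) (N : nat) :
  Dq (1/2) y N = Dq (1/2) 0 N * (pg (1/2) y N / pg 1 y N * gg y (INR N + 1)).
Proof.
  unfold Dq. rewrite (Cmod_gauss_pg 1 (2 * y)) by lra. rewrite (Cmod_gauss_pg (1/2) y) by lra.
  replace (2 * 0) with 0 by ring.
  pose proof (pg_double y N) as Hd.
  pose proof (pg_pos 1 y N ltac:(lra)). pose proof (pg_pos (1/2) y N ltac:(lra)).
  pose proof (pg_pos 1 (2 * y) (2 * N) ltac:(lra)).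
  pose proof (gg_ge1 y (INR N + 1) ltac:(pose proof (pos_INR N); lra)).
  assert (E : pg 1 (2 * y) (2 * N) = pg (1/2) y N * pg 1 y N / gg y (INR N + 1)).
  { rewrite <- Hd. field. lra. }
  rewrite E.
  assert (HG1 : 0 < Cmod (gauss_seq (1/2, 0) N)).
  { apply Cmod_gt_0. apply gauss_nonzero, poch_nonzero. simpl; lra. }
  field. repeat split; try lra; try (apply Rgt_not_eq, pow_lt; auto).
Qed.

Lemma eventually_large (y : R) : eventually (fun N : nat => y ^ 2 <= (INR N + 1) ^ 2).
Proof.
  destruct (nat_large (Rabs y)) as [N0 HN0]. exists N0. intros n Hn.
  assert (INR N0 <= INR n) by (apply le_INR; auto).
  pose proof (pos_INR n). pose proof (Rabs_pos y).
  assert (y^2 = Rabs y ^ 2) by (unfold Rabs; destruct Rcase_abs; ring).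
  rewrite H2. apply pow_incr. lra.
Qed.

Lemma Dl_bounds_odd (y : R) :
  / (32 * (1 + y ^ 2)) * Dl 1 0 ^ 2 <= Dl 1 y ^ 2 <= 8 / (1 + y ^ 2) * Dl 1 0 ^ 2.
Proof.
  apply (lim_sq_bounds (Dq 1 y) (Dq 1 0)); try (apply Dq_lim; lra).
  eapply filter_imp; [|apply eventually_large with (y := y)].
  intros N HN. rewrite (Dq_identity_odd y N).
  destruct (ratio_bounds y N HN) as [[H1 H2] _].
  set (Q := pg 1 y N / pg (1 / 2) y N * gg y (INR N + 1)) in *.
  pose proof (pow2_ge_0 (Dq 1 0 N)).
  rewrite Rpow_mult_distr. rewrite (Rmult_comm (Dq 1 0 N ^ 2)).
  split; apply Rmult_le_compat_r; auto.
Qed.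

Lemma Dl_bounds_even (y : R) :
  (1 + y ^ 2) / 2 * Dl (1/2) 0 ^ 2 <= Dl (1/2) y ^ 2 <= 128 * (1 + y ^ 2) * Dl (1/2) 0 ^ 2.
Proof.
  apply (lim_sq_bounds (Dq (1/2) y) (Dq (1/2) 0)); try (apply Dq_lim; lra).
  eapply filter_imp; [|apply eventually_large with (y := y)].
  intros N HN. rewrite (Dq_identity_even y N).
  destruct (ratio_bounds y N HN) as [_ [H1 H2]].
  pose proof (pow2_ge_0 (Dq (1/2) 0 N)).
  rewrite Rpow_mult_distr. rewrite (Rmult_comm (Dq (1/2) 0 N ^ 2)).
  split; apply Rmult_le_compat_r; auto.
Qed.

Lemma Dl_pos (x y : R) : 0 < x -> 0 < Dl x y.
Proof.
  intro Hx. unfold Dl.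
  assert (0 < Cmod (Gamma (1, 2 * y))) by (apply Cmod_gt_0, Gamma_nonzero; simpl; lra).
  assert (0 < Cmod (Gamma (x, y))) by (apply Cmod_gt_0, Gamma_nonzero; simpl; lra).
  apply Rdiv_lt_0_compat; apply pow_lt; auto. apply pow_lt; auto.
Qed.

Lemma lim_of_filterlim {T : Type} (F : (T -> Prop) -> Prop) (f : T -> C) (L : C) :
  ProperFilter F -> @filterlim T C_CS f F (@locally C_CS L) -> @lim C_CS (filtermap f F) = L.
Proof.
  intros PF HL.
  assert (FF : ProperFilter (filtermap f F)) by (apply filtermap_proper_filter; auto).
  assert (Hc : cauchy (filtermap f F)).
  { intro eps. exists L. apply HL. apply locally_ball. }
  pose proof (@complete_cauchy C_CS _ FF Hc) as Hlim.
  apply (@is_filter_lim_unique _ C_NormedModule (filtermap f F) (Proper_StrongProper _ FF)).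
  - intros P [eps HP]. eapply filter_imp; [|apply (Hlim eps)]. intros x Hx. apply HP. exact Hx.
  - exact HL.
Qed.

Lemma lim_punctured (bfun Psi : R -> C) :
  (forall l, l <> 0 -> bfun l = Psi l) ->
  (forall eps, 0 < eps -> exists del, 0 < del /\ forall t, Rabs (t - 0) < del -> Cmod (Psi t - Psi 0) < eps) ->
  @lim C_CS (filtermap bfun (locally' 0)) = Psi 0.
Proof.
  intros Heq Hc. apply lim_of_filterlim.
  - exact (Rbar_locally'_filter (Finite 0)).
  - apply (@filterlim_locally R C_CS (locally' 0) _ bfun (Psi 0)).
    intro eps. destruct (Hc eps (cond_pos eps)) as [del [Hd Ht]].
    exists (mkposreal del Hd). intros t Hb Hne. rewrite Heq by auto.
    apply ball_of_Cmod. apply Ht. exact Hb.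
Qed.

Lemma pow4_le (a b : R) : 0 <= a -> 0 <= b -> a ^ 4 <= b ^ 4 -> a <= b.
Proof.
  intros Ha Hb H. apply Rnot_lt_le. intro Hlt.
  assert (Ha3 : 0 < a ^ 3) by (apply pow_lt; lra).
  assert (0 <= a^2 * b + a * b^2 + b^3) by (assert (0 <= b^2) by nra; assert (0 <= b^3) by (apply pow_le; lra); nra).
  assert (E : a^4 - b^4 = (a - b) * (a^3 + (a^2 * b + a * b^2 + b^3))) by ring.
  assert (0 < (a - b) * (a^3 + (a^2 * b + a * b^2 + b^3))) by (apply Rmult_lt_0_compat; lra).
  lra.
Qed.

Lemma final_gen (bfun Psi : R -> C) (e : nat) (c1 c2 : R) :
  (forall l, l <> 0 -> bfun l = Psi l) ->
  (forall eps, 0 < eps -> exists del, 0 < del /\ forall t, Rabs (t - 0) < del -> Cmod (Psi t - Psi 0) < eps) ->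
  Psi 0 <> RtoC 0 -> 0 < c1 ->
  (forall l, l <> 0 -> c1 <= Cmod (Psi l) ^ 4 * (1 + l ^ 2) ^ e <= c2) ->
  let b := fun l => if Req_EM_T l 0 then @lim C_CS (filtermap bfun (locally' 0)) else bfun l in
  (forall l, b l <> RtoC 0) /\
  (exists K, 0 < K /\ forall l,
     / K * Rpower (1 + l ^ 2) (INR e / 4) <= / Cmod (b l) /\
     / Cmod (b l) <= K * Rpower (1 + l ^ 2) (INR e / 4)).
Proof.
  intros Heq Hc H0 Hc1 Hb b.
  assert (Hb0 : b 0 = Psi 0).
  { unfold b. destruct (Req_EM_T 0 0) as [_|n]; [|lra]. apply lim_punctured; auto. }
  assert (Hbl : forall l, l <> 0 -> b l = Psi l).
  { intros l Hl. unfold b. destruct (Req_EM_T l 0); [contradiction|]. auto. }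
  assert (HPsi : forall l, Psi l <> RtoC 0).
  { intros l. destruct (Req_dec l 0) as [E|E]; [subst; auto|].
    intro Z. destruct (Hb l E) as [H1 _]. rewrite Z, Cmod_0 in H1.
    replace (0 ^ 4) with 0 in H1 by ring. lra. }
  split.
  - intros l. destruct (Req_dec l 0) as [E|E]; [subst; rewrite Hb0; auto| rewrite Hbl; auto].
  - set (m0 := Cmod (Psi 0)).
    assert (Hm0 : 0 < m0) by (apply Cmod_gt_0; auto).
    set (K := Rmax (Rmax c2 (/ c1)) (Rmax 1 (Rmax m0 (/ m0)))).
    assert (HK1 : 1 <= K) by (unfold K; eapply Rle_trans; [|apply Rmax_r]; apply Rmax_l).
    assert (HKc2 : c2 <= K) by (unfold K; eapply Rle_trans; [|apply Rmax_l]; apply Rmax_l).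
    assert (HKc1 : / c1 <= K) by (unfold K; eapply Rle_trans; [|apply Rmax_l]; apply Rmax_r).
    assert (HKm : m0 <= K) by (unfold K; eapply Rle_trans; [|apply Rmax_r]; eapply Rle_trans; [|apply Rmax_r]; apply Rmax_l).
    assert (HKmi : / m0 <= K) by (unfold K; eapply Rle_trans; [|apply Rmax_r]; eapply Rle_trans; [|apply Rmax_r]; apply Rmax_r).
    exists K. split; [lra|]. intro l.
    destruct (Req_dec l 0) as [E|E].
    + subst l. rewrite Hb0. fold m0. replace (1 + 0 ^ 2) with 1 by ring.
      assert (E1 : Rpower 1 (INR e / 4) = 1) by (unfold Rpower; rewrite ln_1, Rmult_0_r; apply exp_0).
      rewrite E1, !Rmult_1_r. split.
      * apply Rinv_le_contravar; lra.
      * lra.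
    + rewrite Hbl by auto.
      assert (Hx : 0 < 1 + l ^ 2) by (pose proof (pow2_ge_0 l); lra).
      set (T := Rpower (1 + l ^ 2) (INR e / 4)).
      assert (HT : 0 < T) by (unfold T, Rpower; apply exp_pos).
      assert (HT4 : T ^ 4 = (1 + l ^ 2) ^ e).
      { unfold T. replace 4%nat with (4%nat) by reflexivity.
        rewrite <- (Rpower_pow 4 (Rpower (1 + l ^ 2) (INR e / 4))) by (unfold Rpower; apply exp_pos).
        rewrite Rpower_mult. replace (INR e / 4 * INR 4) with (INR e) by (simpl; field).
        apply Rpower_pow; auto. }
      destruct (Hb l E) as [B1 B2]. rewrite <- HT4 in B1, B2.
      set (m := Cmod (Psi l)) in *.
      assert (Hm : 0 < m) by (apply Cmod_gt_0; auto).
      set (P := m ^ 4) in *. set (U := T ^ 4) in *.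
      assert (HP : 0 < P) by (apply pow_lt; auto). assert (HU : 0 < U) by (apply pow_lt; auto).
      assert (HX4 : (/ m) ^ 4 = / P) by (unfold P; field; lra).
      assert (HiK : 0 < / K) by (apply Rinv_0_lt_compat; lra).
      assert (Him : 0 < / m) by (apply Rinv_0_lt_compat; lra).
      split.
      * apply pow4_le; [nra| lra|].
        rewrite HX4, Rpow_mult_distr. fold U.
        assert (E4 : (/ K) ^ 4 = / K ^ 4) by (field; lra). rewrite E4.
        assert (HK4 : K <= K ^ 4).
        { replace (K^4) with (K * K^3) by ring. assert (1 <= K^3) by (replace 1 with (1^3) by ring; apply pow_incr; lra). nra. }
        apply Rle_trans with (U / c2).
        -- unfold Rdiv. rewrite Rmult_comm. apply Rmult_le_compat_l; [lra|].
           assert (0 < c2) by (pose proof (Rmult_lt_0_compat P U HP HU); lra).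
           apply Rinv_le_contravar; lra.
        -- apply (Rmult_le_reg_r (c2 * P)). { assert (0 < c2) by (pose proof (Rmult_lt_0_compat P U HP HU); lra). nra. }
           replace (U / c2 * (c2 * P)) with (P * U) by (field; assert (0 < c2) by (pose proof (Rmult_lt_0_compat P U HP HU); lra); lra).
           replace (/ P * (c2 * P)) with c2 by (field; lra). lra.
      * apply pow4_le; [lra| nra|].
        rewrite HX4, Rpow_mult_distr. fold U.
        assert (HK4 : K <= K ^ 4).
        { replace (K^4) with (K * K^3) by ring. assert (1 <= K^3) by (replace 1 with (1^3) by ring; apply pow_incr; lra). nra. }
        apply Rle_trans with (U / c1).
        -- apply (Rmult_le_reg_r (c1 * P)); [nra|].
           replace (U / c1 * (c1 * P)) with (P * U) by (field; lra).
           replace (/ P * (c1 * P)) with c1 by (field; lra). lra.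
        -- unfold Rdiv. rewrite Rmult_comm. apply Rmult_le_compat_r; [lra|]. lra.
Qed.

Lemma eps_ccont (f : R -> C) (t0 : R) :
  (forall eps, 0 < eps -> exists del, 0 < del /\ forall t, Rabs (t - t0) < del -> Cmod (f t - f t0) < eps) ->
  ccont f t0.
Proof.
  intro H. split; intros eps Heps; destruct (H eps Heps) as [del [Hd Ht]]; exists del; split; auto;
  intros t [_ Htt]; simpl in *; unfold R_dist in *; pose proof (Ht t Htt).
  - eapply Rle_lt_trans; [|exact H0]. 
    replace (fst (f t) - fst (f t0)) with (fst (f t - f t0)%C) by (destruct (f t), (f t0); simpl; ring).
    apply re_le_Cmod'.
  - eapply Rle_lt_trans; [|exact H0]. 
    replace (snd (f t) - snd (f t0)) with (snd (f t - f t0)%C) by (destruct (f t), (f t0); simpl; ring).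
    apply im_le_Cmod.
Qed.

Lemma Gamma_ccont (f : R -> C) (t0 : R) : ccont f t0 -> 0 < Re (f t0) -> ccont (fun t => Gamma (f t)) t0.
Proof.
  intros Hf Hr. apply eps_ccont. apply Gamma_cont; auto.
  intro N. apply poch_nonzero; auto.
Qed.

Lemma ccont_path (x a : R) (t0 : R) : ccont (fun t => (x, a * t) : C) t0.
Proof. apply ccont_pair; [apply cpt_const| apply cpt_mult; [apply cpt_const| apply cpt_id]]. Qed.

Lemma nonpole_im (x y : R) : y <> 0 -> nonpole (x, y).
Proof. intros Hy j E. apply Hy. apply (f_equal snd) in E. simpl in E. lra. Qed.

Lemma poch_nonzero_gen (z : C) (N : nat) :
  (forall j, (j <= N)%nat -> (z + RtoC (INR j))%C <> RtoC 0) -> poch_prod z N <> RtoC 0.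
Proof.
  intro H. induction N.
  - simpl. intro E. apply (H 0%nat (le_n 0)). rewrite E. apply C_ext; simpl; ring.
  - rewrite poch_S. apply Cmult_neq_0; auto.
Qed.

Lemma pp_front (x y : R) (K : nat) : pp x y (S K) = (x ^ 2 + y ^ 2) * pp (x + 1) y K.
Proof.
  induction K.
  - cbn [pp]. simpl INR. ring.
  - cbn [pp] in *. rewrite IHK. replace (x + 1 + INR (S K)) with (x + INR (S (S K))) by (rewrite (S_INR (S K)); ring). ring.
Qed.

Lemma pp_reflect (x y : R) (K : nat) : pp (- (x + INR K)) y K = pp x y K.
Proof.
  revert x. induction K; intro x.
  - cbn [pp]. simpl INR. ring.
  - rewrite pp_front. cbn [pp].
    replace (- (x + INR (S K)) + 1) with (- (x + INR K)) by (rewrite S_INR; ring).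
    rewrite IHK. replace ((- (x + INR (S K))) ^ 2) with ((x + INR (S K)) ^ 2) by ring. ring.
Qed.

Lemma pp_bounds (x y : R) (M : nat) : 0 < x <= 1 ->
  (x ^ 2) ^ (S M) * (1 + y ^ 2) ^ (S M) <= pp x y M <= ((INR M + 1) ^ 2) ^ (S M) * (1 + y ^ 2) ^ (S M).
Proof.
  intro Hx. pose proof (pow2_ge_0 y) as HY.
  induction M.
  - cbn [pp]. simpl INR. simpl. assert (x * x <= 1) by nra. assert (0 <= y * y) by nra. split; nra.
  - cbn [pp]. destruct IHM as [H1 H2].
    set (Y := y ^ 2) in *.
    pose proof (pos_INR M) as HM. rewrite S_INR.
    assert (Hx2 : x ^ 2 <= 1) by (simpl; nra).
    assert (Hx3 : x ^ 2 <= (x + (INR M + 1)) ^ 2) by (simpl; nra).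
    assert (Hx4 : x ^ 2 * Y <= Y) by nra.
    assert (T1 : x ^ 2 * (1 + Y) <= (x + (INR M + 1)) ^ 2 + Y) by nra.
    assert (Hx5 : (x + (INR M + 1)) ^ 2 <= (INR M + 1 + 1) ^ 2) by (simpl; nra).
    assert (Hx6 : 1 <= (INR M + 1 + 1) ^ 2) by (simpl; nra).
    assert (Hx7 : Y <= (INR M + 1 + 1) ^ 2 * Y) by nra.
    assert (T2 : (x + (INR M + 1)) ^ 2 + Y <= (INR M + 1 + 1) ^ 2 * (1 + Y)) by nra.
    assert (P1 : 0 <= (x ^ 2) ^ S M * (1 + Y) ^ S M) by (apply Rmult_le_pos; apply pow_le; nra).
    assert (HxY : 0 <= x ^ 2 * (1 + Y)) by nra.
    assert (Q1 : ((INR M + 1) ^ 2) ^ S M <= ((INR M + 1 + 1) ^ 2) ^ S M) by (apply pow_incr; split; nra).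
    assert (Q0 : 0 <= (1 + Y) ^ S M) by (apply pow_le; lra).
    split.
    + replace ((x ^ 2) ^ S (S M) * (1 + Y) ^ S (S M)) with (((x ^ 2) ^ S M * (1 + Y) ^ S M) * (x ^ 2 * (1 + Y))) by (simpl; ring).
      apply Rmult_le_compat; auto.
    + replace (((INR M + 1 + 1) ^ 2) ^ S (S M) * (1 + Y) ^ S (S M))
        with ((((INR M + 1 + 1) ^ 2) ^ S M * (1 + Y) ^ S M) * ((INR M + 1 + 1) ^ 2 * (1 + Y))) by (simpl; ring).
      apply Rmult_le_compat.
      * left; apply pp_pos; lra.
      * pose proof (pow2_ge_0 (x + (INR M + 1))). lra.
      * eapply Rle_trans; [apply H2|]. apply Rmult_le_compat_r; auto.
      * exact T2.
Qed.

Lemma Cmod_poch_pair (x y : R) (N : nat) : Cmod (poch_prod (x, y) N) ^ 2 = pp x y N.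
Proof. apply Cmod_poch_sq. Qed.

Lemma c_nu_form (n : nat) (nu : Z) (l : R) :
  c_nu n nu l =
  ((cpow 2 (RtoC (rho n) - (0%R, l)) * Gamma ((2 * INR n)%R, 0%R) * Gamma (0%R, l)) /
   (Gamma (((IZR nu + rho n) / 2)%R, (l / 2)%R) * Gamma (((rho n - IZR nu - 2) / 2)%R, (l / 2)%R)))%C.
Proof.
  unfold c_nu.
  assert (E0 : (Ci * RtoC l)%C = (0%R, l)) by (apply C_ext; simpl; ring).
  rewrite E0.
  assert (E1 : (((0%R, l) + RtoC (IZR nu + rho n)) / RtoC 2)%C = (((IZR nu + rho n) / 2)%R, (l / 2)%R))
    by (apply C_ext; simpl; field).
  assert (E2 : (((0%R, l) + RtoC (rho n - IZR nu - 2)) / RtoC 2)%C = (((rho n - IZR nu - 2) / 2)%R, (l / 2)%R))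
    by (apply C_ext; simpl; field).
  assert (E3 : RtoC (rho n - 1) = ((2 * INR n)%R, 0%R)) by (unfold rho; apply C_ext; simpl; ring).
  rewrite E1, E2, E3. reflexivity.
Qed.

Definition Psi_odd (n k' : nat) (l : R) : C :=
  (cpow 2 (RtoC (rho (S n)) - (0%R, l)) * Gamma ((2 * INR (S n))%R, 0%R) * Gamma (1%R, l)
   * poch_prod ((- INR (S k'))%R, (l / 2)%R) k'
   / (RtoC 2 * poch_prod (1%R, (l / 2)%R) (2 * n + k' + 1)%nat * (Gamma (1%R, (l / 2)%R) * Gamma (1%R, (l / 2)%R))))%C.

Lemma odd_eq (n k' : nat) (nu : Z) (l : R) :
  IZR nu = 2 * INR (S n) - 1 + 2 * INR (S k') -> l <> 0 ->
  c_nu (S n) nu l = Psi_odd n k' l.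
Proof.
  intros Hnu Hl. rewrite c_nu_form. unfold Psi_odd.
  set (y := l / 2).
  assert (Hy : y <> 0) by (unfold y; lra).
  set (m1 := (2 * n + k' + 1)%nat).
  assert (EA : (((IZR nu + rho (S n)) / 2)%R, y) = ((1%R, y) + RtoC (INR (S m1)))%C).
  { assert (Em : INR (S m1) = 2 * INR n + INR k' + 2).
    { unfold m1. rewrite S_INR, !plus_INR, mult_INR. replace (INR 2) with 2 by (simpl; ring). simpl INR. ring. }
    apply C_ext; unfold Cplus, RtoC; cbn [fst snd]; [|ring]. unfold rho. rewrite Hnu, Em. rewrite !S_INR. field. }
  assert (EB : (((rho (S n) - IZR nu - 2) / 2)%R, y) = ((- INR (S k'))%R, y)).
  { apply C_ext; cbn [fst snd]; [|ring]. unfold rho. rewrite Hnu, !S_INR. field. }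
  assert (EB2 : ((1%R, y) : C) = (((- INR (S k'))%R, y) + RtoC (INR (S (S k'))))%C).
  { apply C_ext; unfold Cplus, RtoC; cbn [fst snd]; [|ring]. rewrite (S_INR (S k')). ring. }
  assert (E0 : ((1%R, l) : C) = ((0%R, l) + 1)%C) by (apply C_ext; simpl; ring).
  assert (Ey : ((0%R, l) : C) = (RtoC 2 * (0%R, y))%C) by (apply C_ext; simpl; unfold y; field).
  assert (HP : poch_prod ((- INR (S k'))%R, y) (S k') = (poch_prod ((- INR (S k'))%R, y) k' * (0%R, y))%C).
  { rewrite poch_S. f_equal. apply C_ext; simpl; ring. }
  assert (HA : Gamma (((IZR nu + rho (S n)) / 2)%R, y) = (Gamma (1%R, y) * poch_prod (1%R, y) m1)%C).
  { rewrite EA. apply Gamma_shift. apply nonpole_im; auto. }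
  assert (HB : Gamma (1%R, y) = (Gamma ((- INR (S k'))%R, y) * poch_prod ((- INR (S k'))%R, y) (S k'))%C).
  { rewrite EB2 at 1. apply Gamma_shift. apply nonpole_im; auto. }
  assert (H0 : Gamma (1%R, l) = ((0%R, l) * Gamma (0%R, l))%C).
  { rewrite E0. apply Gamma_rec. apply nonpole_im; auto. }
  assert (Hg1 : Gamma (1%R, y) <> RtoC 0) by (apply Gamma_nonzero; simpl; lra).
  assert (HP1 : poch_prod (1%R, y) m1 <> RtoC 0) by (apply poch_nonzero; simpl; lra).
  assert (HP2 : poch_prod ((- INR (S k'))%R, y) k' <> RtoC 0) by (apply poch_nonpole, nonpole_im; auto).
  assert (Hiy : ((0%R, y) : C) <> RtoC 0) by (intro E; apply Hy; apply (f_equal snd) in E; simpl in E; auto).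
  rewrite HP in HB.
  assert (HgB : Gamma ((- INR (S k'))%R, y) <> RtoC 0).
  { intro E. rewrite E in HB. apply Hg1. rewrite HB. ring. }
  rewrite HA, EB, H0, Ey, HB.
  field. repeat split; auto; try (intro E; apply RtoC_inj in E; lra).
Qed.

Lemma ccont_ext (f g : R -> C) t0 : (forall t, f t = g t) -> ccont f t0 -> ccont g t0.
Proof.
  intros E [H1 H2]. split.
  - eapply continuity_pt_ext; [|exact H1]. intro t. simpl. rewrite E. reflexivity.
  - eapply continuity_pt_ext; [|exact H2]. intro t. simpl. rewrite E. reflexivity.
Qed.

Lemma ccont_minus (f g : R -> C) t0 : ccont f t0 -> ccont g t0 -> ccont (fun t => f t - g t)%C t0.
Proof. intros [] []. split; simpl; [apply (cpt_plus (fun t => fst (f t)) (fun t => - fst (g t)))| apply (cpt_plus (fun t => snd (f t)) (fun t => - snd (g t)))]; auto;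
  apply (continuity_pt_opp (fun t => _ (g t))); auto. Qed.

Lemma ccont_div (f g : R -> C) t0 : ccont f t0 -> ccont g t0 -> g t0 <> RtoC 0 -> ccont (fun t => f t / g t)%C t0.
Proof. intros. unfold Cdiv. apply ccont_mult; auto. apply ccont_inv; auto. Qed.


Lemma ccont_pth (x a : R) : ccont (fun t => (x, (t * a)%R) : C) 0.
Proof. apply ccont_pair; [apply cpt_const| apply cpt_mult; [apply cpt_id|apply cpt_const]]. Qed.

Lemma ccont_cp (n : nat) : ccont (fun l => cpow 2 (RtoC (rho n) - (0%R, l))) 0.
Proof.
  apply ccont_cpow. apply ccont_minus; [apply ccont_const|].
  apply (ccont_ext (fun t => (0%R, (t * 1)%R) : C)); [intro t; f_equal; ring| apply ccont_pth].
Qed.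

Lemma ccont_Psi_odd (n k' : nat) : ccont (Psi_odd n k') 0.
Proof.
  unfold Psi_odd.
  assert (Hh : forall x : R, ccont (fun l => (x, (l / 2)%R) : C) 0).
  { intro x. apply (ccont_ext (fun t => (x, (t * (/2))%R) : C)); [intro t; reflexivity| apply ccont_pth]. }
  assert (H1 : ccont (fun l => (1%R, l) : C) 0).
  { apply (ccont_ext (fun t => (1%R, (t * 1)%R) : C)); [intro t; f_equal; ring| apply ccont_pth]. }
  apply ccont_div.
  - apply ccont_mult; [apply ccont_mult; [apply ccont_mult|]|].
    + apply ccont_cp.
    + apply ccont_const.
    + apply Gamma_ccont; auto. simpl. lra.
    + apply ccont_poch. apply Hh.
  - apply ccont_mult; [apply ccont_mult|].
    + apply ccont_const.
    + apply ccont_poch. apply Hh.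
    + apply ccont_mult; apply Gamma_ccont; auto; simpl; lra.
  - replace (0 / 2) with 0 by field.
    apply Cmult_neq_0; [apply Cmult_neq_0|].
    + intro E. apply RtoC_inj in E. lra.
    + apply poch_nonzero. simpl. lra.
    + apply Cmult_neq_0; apply Gamma_nonzero; simpl; lra.
Qed.

Lemma Psi_odd_0 (n k' : nat) : Psi_odd n k' 0 <> RtoC 0.
Proof.
  unfold Psi_odd. replace (0 / 2) with 0 by field.
  assert (Hd : (RtoC 2 * poch_prod (1%R, 0%R) (2 * n + k' + 1) * (Gamma (1%R, 0%R) * Gamma (1%R, 0%R)))%C <> RtoC 0).
  { apply Cmult_neq_0; [apply Cmult_neq_0|].
    + intro E. apply RtoC_inj in E. lra.
    + apply poch_nonzero. simpl. lra.
    + apply Cmult_neq_0; apply Gamma_nonzero; simpl; lra. }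
  unfold Cdiv. apply Cmult_neq_0; [|intro E; apply Hd; 
    assert (E2 : (_ * / _)%C = RtoC 1) by (apply Cinv_r; exact Hd); rewrite E in E2;
    rewrite Cmult_0_r in E2; apply RtoC_inj in E2; lra].
  apply Cmult_neq_0; [apply Cmult_neq_0; [apply Cmult_neq_0|]|].
  - apply cpow_neq0.
  - apply Gamma_nonzero. unfold Re; cbn [fst]. rewrite S_INR. pose proof (pos_INR n). lra.
  - apply Gamma_nonzero. simpl. lra.
  - apply poch_nonzero_gen. intros j Hj E. apply (f_equal fst) in E. unfold Cplus, RtoC in E; cbn [fst] in E.
    assert (INR j < INR (S k')) by (apply lt_INR; lia). lra.
Qed.

Lemma combine (P C0 Q Rr W L : R) (d e : nat) (q1 q2 r1 r2 : R) :
  0 < C0 -> 1 <= W -> W <= L <= 4 * W -> q1 <= Q <= q2 -> r1 <= Rr * W ^ d <= r2 -> 0 < q1 -> 0 < r1 ->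
  P * W ^ e = C0 ^ 2 * Q * (Rr * W ^ d) ^ 2 -> 0 <= P ->
  C0 ^ 2 * q1 * r1 ^ 2 <= P * L ^ e <= 4 ^ e * (C0 ^ 2 * q2 * r2 ^ 2).
Proof.
  intros HC HW HL HQ HR Hq1 Hr1 HP HP0.
  assert (HWe : W ^ e <= L ^ e) by (apply pow_incr; lra).
  assert (HLe : L ^ e <= 4 ^ e * W ^ e) by (rewrite <- Rpow_mult_distr; apply pow_incr; lra).
  assert (HC2 : 0 < C0 ^ 2) by (apply pow_lt; auto).
  assert (Hsq1 : r1 ^ 2 <= (Rr * W ^ d) ^ 2) by (apply pow_incr; lra).
  assert (Hsq2 : (Rr * W ^ d) ^ 2 <= r2 ^ 2) by (apply pow_incr; lra).
  assert (Hlow : C0 ^ 2 * q1 * r1 ^ 2 <= P * W ^ e).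
  { rewrite HP. pose proof (pow2_ge_0 r1). apply Rmult_le_compat; try nra. }
  assert (Hup : P * W ^ e <= C0 ^ 2 * q2 * r2 ^ 2).
  { rewrite HP. pose proof (pow2_ge_0 r1). apply Rmult_le_compat; try nra. }
  split.
  - eapply Rle_trans; [exact Hlow|]. apply Rmult_le_compat_l; auto.
  - eapply Rle_trans; [apply Rmult_le_compat_l; [exact HP0| exact HLe]|].
    assert (0 <= 4 ^ e) by (apply pow_le; lra). nra.
Qed.

Lemma Psi_odd_mod (n k' : nat) (l : R) :
  Cmod (Psi_odd n k' l) ^ 2 =
  (exp (rho (S n) * ln 2) ^ 2 * Cmod (Gamma ((2 * INR (S n))%R, 0%R)) ^ 2 / 4) * Dl 1 (l / 2)
    * (pp 1 (l / 2) k' / pp 1 (l / 2) (2 * n + k' + 1)).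
Proof.
  unfold Psi_odd. set (y := l / 2). set (m1 := (2 * n + k' + 1)%nat).
  assert (Hg1 : 0 < Cmod (Gamma (1%R, y))) by (apply Cmod_gt_0, Gamma_nonzero; simpl; lra).
  assert (HP1 : 0 < Cmod (poch_prod (1%R, y) m1)) by (apply Cmod_gt_0, poch_nonzero; simpl; lra).
  assert (Hd : (RtoC 2 * poch_prod (1%R, y) m1 * (Gamma (1%R, y) * Gamma (1%R, y)))%C <> RtoC 0).
  { apply Cmod_gt_0. rewrite !Cmod_mult, Cmod_R, Rabs_pos_eq by lra. 
    apply Rmult_lt_0_compat; [apply Rmult_lt_0_compat|]; nra. }
  rewrite Cmod_div by auto. rewrite !Cmod_mult, Cmod_R, Rabs_pos_eq by lra.
  rewrite Cmod_cpow.
  assert (Ere : Re (RtoC (rho (S n)) - (0%R, l))%C = rho (S n)) by (simpl; ring).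
  rewrite Ere.
  pose proof (Cmod_poch_sq (- INR (S k')) y k') as E1.
  replace (- INR (S k')) with (- (1 + INR k')) in E1 by (rewrite S_INR; ring).
  rewrite pp_reflect in E1.
  pose proof (Cmod_poch_sq 1 y m1) as E2.
  unfold Dl. replace (2 * y) with l by (unfold y; field).
  replace (- INR (S k')) with (- (1 + INR k')) by (rewrite S_INR; ring).
  rewrite <- E1, <- E2.
  field. split; lra.
Qed.

Lemma ratio_pp_bounds (x y : R) (a b : nat) : 0 < x <= 1 ->
  let W := 1 + y ^ 2 in
  (x ^ 2) ^ S a / ((INR (a + b) + 1) ^ 2) ^ S (a + b) <= pp x y a / pp x y (a + b) * W ^ b
    <= ((INR a + 1) ^ 2) ^ S a / (x ^ 2) ^ S (a + b).
Proof.
  intros Hx W.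
  destruct (pp_bounds x y a Hx) as [A1 A2]. destruct (pp_bounds x y (a + b) Hx) as [B1 B2].
  fold W in A1, A2, B1, B2.
  assert (HW : 1 <= W) by (unfold W; pose proof (pow2_ge_0 y); lra).
  assert (HWa : 0 < W ^ S a) by (apply pow_lt; lra).
  assert (HWb : 0 < W ^ b) by (apply pow_lt; lra).
  assert (EW : W ^ S (a + b) = W ^ S a * W ^ b) by (rewrite <- pow_add; f_equal).
  rewrite EW in B1, B2.
  assert (Hx2 : 0 < (x ^ 2) ^ S a) by (apply pow_lt, pow_lt; lra).
  assert (Hx3 : 0 < (x ^ 2) ^ S (a + b)) by (apply pow_lt, pow_lt; lra).
  assert (Hc : 0 < ((INR (a + b) + 1) ^ 2) ^ S (a + b)) by (apply pow_lt, pow_lt; pose proof (pos_INR (a+b)); lra).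
  assert (Hp1 : 0 < pp x y a) by (apply pp_pos; lra).
  assert (Hp2 : 0 < pp x y (a + b)) by (apply pp_pos; lra).
  split.
  - apply (Rmult_le_reg_r (pp x y (a + b) * ((INR (a + b) + 1) ^ 2) ^ S (a + b))); [nra|].
    replace ((x ^ 2) ^ S a / ((INR (a + b) + 1) ^ 2) ^ S (a + b) * (pp x y (a + b) * ((INR (a + b) + 1) ^ 2) ^ S (a + b)))
      with ((x ^ 2) ^ S a * pp x y (a + b)) by (field; lra).
    replace (pp x y a / pp x y (a + b) * W ^ b * (pp x y (a + b) * ((INR (a + b) + 1) ^ 2) ^ S (a + b)))
      with (pp x y a * W ^ b * ((INR (a + b) + 1) ^ 2) ^ S (a + b)) by (field; lra).
    apply Rle_trans with ((x ^ 2) ^ S a * (((INR (a + b) + 1) ^ 2) ^ S (a + b) * (W ^ S a * W ^ b))).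
    + apply Rmult_le_compat_l; lra.
    + assert ((x ^ 2) ^ S a * W ^ S a * W ^ b <= pp x y a * W ^ b) by (apply Rmult_le_compat_r; lra).
      nra.
  - apply (Rmult_le_reg_r (pp x y (a + b) * (x ^ 2) ^ S (a + b))); [nra|].
    replace (((INR a + 1) ^ 2) ^ S a / (x ^ 2) ^ S (a + b) * (pp x y (a + b) * (x ^ 2) ^ S (a + b)))
      with (((INR a + 1) ^ 2) ^ S a * pp x y (a + b)) by (field; lra).
    replace (pp x y a / pp x y (a + b) * W ^ b * (pp x y (a + b) * (x ^ 2) ^ S (a + b)))
      with (pp x y a * W ^ b * (x ^ 2) ^ S (a + b)) by (field; lra).
    assert (pp x y a * W ^ b <= ((INR a + 1) ^ 2) ^ S a * W ^ S a * W ^ b) by (apply Rmult_le_compat_r; lra).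
    assert (0 < ((INR a + 1) ^ 2) ^ S a) by (apply pow_lt, pow_lt; pose proof (pos_INR a); lra).
    assert (((INR a + 1) ^ 2) ^ S a * W ^ S a * W ^ b * (x ^ 2) ^ S (a + b) <= ((INR a + 1) ^ 2) ^ S a * pp x y (a + b)).
    { replace (((INR a + 1) ^ 2) ^ S a * W ^ S a * W ^ b * (x ^ 2) ^ S (a + b))
        with (((INR a + 1) ^ 2) ^ S a * ((x ^ 2) ^ S (a + b) * (W ^ S a * W ^ b))) by ring.
      apply Rmult_le_compat_l; lra. }
    assert (0 <= (x ^ 2) ^ S (a + b)) by lra. nra.
Qed.

Lemma Psi_odd_bounds (n k' : nat) : exists c1 c2, 0 < c1 /\ forall l, l <> 0 ->
  c1 <= Cmod (Psi_odd n k' l) ^ 4 * (1 + l ^ 2) ^ ((2 * n + 1) * 2 + 1) <= c2.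
Proof.
  set (C0 := exp (rho (S n) * ln 2) ^ 2 * Cmod (Gamma ((2 * INR (S n))%R, 0%R)) ^ 2 / 4).
  assert (HC0 : 0 < C0).
  { unfold C0. assert (0 < Cmod (Gamma ((2 * INR (S n))%R, 0%R))).
    { apply Cmod_gt_0, Gamma_nonzero. unfold Re; cbn [fst]. rewrite S_INR. pose proof (pos_INR n). lra. }
    pose proof (exp_pos (rho (S n) * ln 2)). apply Rmult_lt_0_compat; [apply Rmult_lt_0_compat|]; try apply pow_lt; lra. }
  set (d := (2 * n + 1)%nat).
  set (Z := Dl 1 0 ^ 2).
  assert (HZ : 0 < Z) by (apply pow_lt, Dl_pos; lra).
  set (a := k'). 
  set (A1 := ((INR a + 1) ^ 2) ^ S a). set (A2 := ((INR (a + d) + 1) ^ 2) ^ S (a + d)).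
  assert (HA2 : 0 < A2) by (apply pow_lt, pow_lt; pose proof (pos_INR (a + d)); lra).
  exists (C0 ^ 2 * (Z / 32) * (/ A2) ^ 2), (4 ^ (d * 2 + 1) * (C0 ^ 2 * (8 * Z) * A1 ^ 2)).
  split.
  { apply Rmult_lt_0_compat; [apply Rmult_lt_0_compat|]; try apply pow_lt; try lra.
    apply Rinv_0_lt_compat; auto. }
  intros l Hl.
  set (y := l / 2). set (W := 1 + y ^ 2).
  assert (HW : 1 <= W) by (unfold W; pose proof (pow2_ge_0 y); lra).
  pose proof (Psi_odd_mod n k' l) as HM. fold y in HM.
  replace (2 * n + k' + 1)%nat with (a + d)%nat in HM by (unfold a, d; lia).
  fold C0 in HM.
  set (Rr := pp 1 y a / pp 1 y (a + d)) in *.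
  destruct (ratio_pp_bounds 1 y a d ltac:(lra)) as [R1 R2]. fold W in R1, R2. fold Rr in R1, R2.
  replace ((1 ^ 2) ^ S a) with 1 in R1 by (rewrite pow1, pow1; reflexivity).
  replace ((1 ^ 2) ^ S (a + d)) with 1 in R2 by (rewrite pow1, pow1; reflexivity).
  destruct (Dl_bounds_odd y) as [D1 D2]. fold W in D1, D2. fold Z in D1, D2.
  set (Dy := Dl 1 y) in *.
  apply (combine (Cmod (Psi_odd n k' l) ^ 4) C0 (Dy ^ 2 * W) Rr W (1 + l ^ 2) d (d * 2 + 1) (Z / 32) (8 * Z) (/ A2) A1); auto.
  - unfold W, y. pose proof (pow2_ge_0 l). split; nra.
  - split.
    + apply (Rmult_le_reg_r (/ W)); [apply Rinv_0_lt_compat; lra|].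
      replace (Dy ^ 2 * W * / W) with (Dy ^ 2) by (field; lra).
      replace (Z / 32 * / W) with (/ (32 * W) * Z) by (field; lra). lra.
    + apply (Rmult_le_reg_r (/ W)); [apply Rinv_0_lt_compat; lra|].
      replace (Dy ^ 2 * W * / W) with (Dy ^ 2) by (field; lra).
      replace (8 * Z * / W) with (8 / W * Z) by (field; lra). lra.
  - split; [rewrite <- Rdiv_1_l; exact R1| rewrite <- (Rdiv_1_r A1); exact R2].
  - lra.
  - apply Rinv_0_lt_compat; auto.
  - replace (Cmod (Psi_odd n k' l) ^ 4) with ((Cmod (Psi_odd n k' l) ^ 2) ^ 2) by ring.
    rewrite HM. rewrite pow_add, pow_mult. unfold Rr, a. ring.
  - apply pow_le, Cmod_ge_0.
Qed.

Definition Psi_even (n m : nat) (l : R) : C :=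
  (cpow 2 (RtoC (rho (S n)) - (0%R, l)) * Gamma ((2 * INR (S n))%R, 0%R) * (0%R, (-1)%R) * Gamma (1%R, l)
   * poch_prod ((- (1/2 + INR m))%R, (l / 2)%R) m
   / (poch_prod ((1/2)%R, (l / 2)%R) (2 * n + m + 1)%nat * (Gamma ((1/2)%R, (l / 2)%R) * Gamma ((1/2)%R, (l / 2)%R))))%C.

Lemma even_eq (n m : nat) (nu : Z) (l : R) :
  IZR nu = 2 * INR (S n) + 2 * INR m -> l <> 0 ->
  (RtoC l * c_nu (S n) nu l)%C = Psi_even n m l.
Proof.
  intros Hnu Hl. rewrite c_nu_form. unfold Psi_even.
  set (y := l / 2).
  assert (Hy : y <> 0) by (unfold y; lra).
  set (m2 := (2 * n + m + 1)%nat).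
  assert (EA : (((IZR nu + rho (S n)) / 2)%R, y) = (((1/2)%R, y) + RtoC (INR (S m2)))%C).
  { assert (Em : INR (S m2) = 2 * INR n + INR m + 2).
    { unfold m2. rewrite S_INR, !plus_INR, mult_INR. replace (INR 2) with 2 by (simpl; ring). simpl INR. ring. }
    apply C_ext; unfold Cplus, RtoC; cbn [fst snd]; [|ring]. unfold rho. rewrite Hnu, Em. rewrite !S_INR. field. }
  assert (EB : (((rho (S n) - IZR nu - 2) / 2)%R, y) = ((- (1/2 + INR m))%R, y)).
  { apply C_ext; cbn [fst snd]; [|ring]. unfold rho. rewrite Hnu, !S_INR. field. }
  assert (EB2 : (((1/2)%R, y) : C) = (((- (1/2 + INR m))%R, y) + RtoC (INR (S m)))%C).
  { apply C_ext; unfold Cplus, RtoC; cbn [fst snd]; [|ring]. rewrite (S_INR m). field. }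
  assert (E0 : ((1%R, l) : C) = ((0%R, l) + 1)%C) by (apply C_ext; simpl; ring).
  assert (El : RtoC l = ((0%R, l) * (0%R, (-1)%R))%C) by (apply C_ext; simpl; ring).
  assert (HA : Gamma (((IZR nu + rho (S n)) / 2)%R, y) = (Gamma ((1/2)%R, y) * poch_prod ((1/2)%R, y) m2)%C).
  { rewrite EA. apply Gamma_shift. apply nonpole_im; auto. }
  assert (HB : Gamma ((1/2)%R, y) = (Gamma ((- (1/2 + INR m))%R, y) * poch_prod ((- (1/2 + INR m))%R, y) m)%C).
  { rewrite EB2 at 1. apply Gamma_shift. apply nonpole_im; auto. }
  assert (H0 : Gamma (1%R, l) = ((0%R, l) * Gamma (0%R, l))%C).
  { rewrite E0. apply Gamma_rec. apply nonpole_im; auto. }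
  assert (Hg1 : Gamma ((1/2)%R, y) <> RtoC 0) by (apply Gamma_nonzero; simpl; lra).
  assert (HP1 : poch_prod ((1/2)%R, y) m2 <> RtoC 0) by (apply poch_nonzero; simpl; lra).
  assert (HP2 : poch_prod ((- (1/2 + INR m))%R, y) m <> RtoC 0) by (apply poch_nonpole, nonpole_im; auto).
  assert (Hil : ((0%R, l) : C) <> RtoC 0) by (intro E; apply Hl; apply (f_equal snd) in E; simpl in E; auto).
  assert (HgB : Gamma ((- (1/2 + INR m))%R, y) <> RtoC 0).
  { intro E. rewrite E in HB. apply Hg1. rewrite HB. ring. }
  rewrite HA, EB, H0, HB, El.
  field. repeat split; auto.
Qed.

Lemma ccont_Psi_even (n m : nat) : ccont (Psi_even n m) 0.
Proof.
  unfold Psi_even.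
  assert (Hh : forall x : R, ccont (fun l => (x, (l / 2)%R) : C) 0).
  { intro x. apply (ccont_ext (fun t => (x, (t * (/2))%R) : C)); [intro t; reflexivity| apply ccont_pth]. }
  assert (H1 : ccont (fun l => (1%R, l) : C) 0).
  { apply (ccont_ext (fun t => (1%R, (t * 1)%R) : C)); [intro t; f_equal; ring| apply ccont_pth]. }
  apply ccont_div.
  - apply ccont_mult; [apply ccont_mult; [apply ccont_mult; [apply ccont_mult|]|]|].
    + apply ccont_cp.
    + apply ccont_const.
    + apply ccont_const.
    + apply Gamma_ccont; auto. simpl. lra.
    + apply ccont_poch. apply Hh.
  - apply ccont_mult.
    + apply ccont_poch. apply Hh.
    + apply ccont_mult; apply Gamma_ccont; auto; simpl; lra.
  - replace (0 / 2) with 0 by field.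
    apply Cmult_neq_0.
    + apply poch_nonzero. simpl. lra.
    + apply Cmult_neq_0; apply Gamma_nonzero; simpl; lra.
Qed.

Lemma Psi_even_0 (n m : nat) : Psi_even n m 0 <> RtoC 0.
Proof.
  unfold Psi_even. replace (0 / 2) with 0 by field.
  assert (Hd : (poch_prod ((1/2)%R, 0%R) (2 * n + m + 1) * (Gamma ((1/2)%R, 0%R) * Gamma ((1/2)%R, 0%R)))%C <> RtoC 0).
  { apply Cmult_neq_0.
    + apply poch_nonzero. simpl. lra.
    + apply Cmult_neq_0; apply Gamma_nonzero; simpl; lra. }
  unfold Cdiv. apply Cmult_neq_0; [|intro E; apply Hd; 
    assert (E2 : (_ * / _)%C = RtoC 1) by (apply Cinv_r; exact Hd); rewrite E in E2;
    rewrite Cmult_0_r in E2; apply RtoC_inj in E2; lra].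
  apply Cmult_neq_0; [apply Cmult_neq_0; [apply Cmult_neq_0; [apply Cmult_neq_0|]|]|].
  - apply cpow_neq0.
  - apply Gamma_nonzero. unfold Re; cbn [fst]. rewrite S_INR. pose proof (pos_INR n). lra.
  - intro E. apply (f_equal snd) in E. simpl in E. lra.
  - apply Gamma_nonzero. simpl. lra.
  - apply poch_nonzero_gen. intros j Hj E. apply (f_equal fst) in E. unfold Cplus, RtoC in E; cbn [fst] in E.
    assert (INR j <= INR m) by (apply le_INR; lia). lra.
Qed.

Lemma Psi_even_mod (n m : nat) (l : R) :
  Cmod (Psi_even n m l) ^ 2 =
  (exp (rho (S n) * ln 2) ^ 2 * Cmod (Gamma ((2 * INR (S n))%R, 0%R)) ^ 2) * Dl (1/2) (l / 2)
    * (pp (1/2) (l / 2) m / pp (1/2) (l / 2) (2 * n + m + 1)).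
Proof.
  unfold Psi_even. set (y := l / 2). set (m2 := (2 * n + m + 1)%nat).
  assert (Hg1 : 0 < Cmod (Gamma ((1/2)%R, y))) by (apply Cmod_gt_0, Gamma_nonzero; simpl; lra).
  assert (HP1 : 0 < Cmod (poch_prod ((1/2)%R, y) m2)) by (apply Cmod_gt_0, poch_nonzero; simpl; lra).
  assert (Hd : (poch_prod ((1/2)%R, y) m2 * (Gamma ((1/2)%R, y) * Gamma ((1/2)%R, y)))%C <> RtoC 0).
  { apply Cmod_gt_0. rewrite !Cmod_mult. apply Rmult_lt_0_compat; nra. }
  rewrite Cmod_div by auto. rewrite !Cmod_mult.
  rewrite Cmod_cpow.
  assert (Ere : Re (RtoC (rho (S n)) - (0%R, l))%C = rho (S n)) by (simpl; ring).
  rewrite Ere.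
  assert (Ei : Cmod (0%R, (-1)%R) = 1).
  { unfold Cmod; cbn [fst snd]. replace (0 ^ 2 + (-1) ^ 2) with 1 by ring. apply sqrt_1. }
  rewrite Ei.
  pose proof (Cmod_poch_sq (- (1/2 + INR m)) y m) as E1.
  rewrite pp_reflect in E1.
  pose proof (Cmod_poch_sq (1/2) y m2) as E2.
  unfold Dl. replace (2 * y) with l by (unfold y; field).
  rewrite <- E1, <- E2.
  field. split; lra.
Qed.

Lemma Psi_even_bounds (n m : nat) : exists c1 c2, 0 < c1 /\ forall l, l <> 0 ->
  c1 <= Cmod (Psi_even n m l) ^ 4 * (1 + l ^ 2) ^ ((2 * n + 1) * 2 - 1) <= c2.
Proof.
  set (C0 := exp (rho (S n) * ln 2) ^ 2 * Cmod (Gamma ((2 * INR (S n))%R, 0%R)) ^ 2).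
  assert (HC0 : 0 < C0).
  { unfold C0. assert (0 < Cmod (Gamma ((2 * INR (S n))%R, 0%R))).
    { apply Cmod_gt_0, Gamma_nonzero. unfold Re; cbn [fst]. rewrite S_INR. pose proof (pos_INR n). lra. }
    pose proof (exp_pos (rho (S n) * ln 2)). apply Rmult_lt_0_compat; try apply pow_lt; lra. }
  set (d := (2 * n + 1)%nat).
  set (e := (d * 2 - 1)%nat).
  set (Z := Dl (1/2) 0 ^ 2).
  assert (HZ : 0 < Z) by (apply pow_lt, Dl_pos; lra).
  set (A1 := ((INR m + 1) ^ 2) ^ S m). set (A2 := ((INR (m + d) + 1) ^ 2) ^ S (m + d)).
  set (h1 := ((1/2) ^ 2) ^ S m). set (h2 := ((1/2) ^ 2) ^ S (m + d)).
  assert (HA2 : 0 < A2) by (apply pow_lt, pow_lt; pose proof (pos_INR (m + d)); lra).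
  assert (Hh1 : 0 < h1) by (apply pow_lt, pow_lt; lra).
  assert (Hh2 : 0 < h2) by (apply pow_lt, pow_lt; lra).
  exists (C0 ^ 2 * (Z / 2) * (h1 / A2) ^ 2), (4 ^ e * (C0 ^ 2 * (128 * Z) * (A1 / h2) ^ 2)).
  split.
  { apply Rmult_lt_0_compat; [apply Rmult_lt_0_compat|]; try apply pow_lt; try lra.
    apply Rdiv_lt_0_compat; auto. }
  intros l Hl.
  set (y := l / 2). set (W := 1 + y ^ 2).
  assert (HW : 1 <= W) by (unfold W; pose proof (pow2_ge_0 y); lra).
  pose proof (Psi_even_mod n m l) as HM. fold y in HM.
  replace (2 * n + m + 1)%nat with (m + d)%nat in HM by (unfold d; lia).
  fold C0 in HM.
  set (Rr := pp (1/2) y m / pp (1/2) y (m + d)) in *.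
  destruct (ratio_pp_bounds (1/2) y m d ltac:(lra)) as [R1 R2]. fold W in R1, R2. fold Rr in R1, R2.
  fold h1 h2 A1 A2 in R1, R2.
  destruct (Dl_bounds_even y) as [D1 D2]. fold W in D1, D2. fold Z in D1, D2.
  set (Dy := Dl (1/2) y) in *.
  apply (combine (Cmod (Psi_even n m l) ^ 4) C0 (Dy ^ 2 / W) Rr W (1 + l ^ 2) d e (Z / 2) (128 * Z) (h1 / A2) (A1 / h2)); auto.
  - unfold W, y. pose proof (pow2_ge_0 l). split; nra.
  - split.
    + apply (Rmult_le_reg_r W); [lra|].
      replace (Dy ^ 2 / W * W) with (Dy ^ 2) by (field; lra).
      replace (Z / 2 * W) with (W / 2 * Z) by (field; lra). lra.
    + apply (Rmult_le_reg_r W); [lra|].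
      replace (Dy ^ 2 / W * W) with (Dy ^ 2) by (field; lra).
      replace (128 * Z * W) with (128 * W * Z) by ring. lra.
  - lra.
  - apply Rdiv_lt_0_compat; auto.
  - replace (Cmod (Psi_even n m l) ^ 4) with ((Cmod (Psi_even n m l) ^ 2) ^ 2) by ring.
    rewrite HM.
    assert (Ed : (W ^ d) ^ 2 = W ^ e * W).
    { rewrite <- pow_mult. replace (W ^ e * W) with (W ^ (e + 1)) by (rewrite pow_add; ring).
      f_equal. unfold e, d. lia. }
    rewrite (Rpow_mult_distr Rr), Ed. field. lra.
  - apply pow_le, Cmod_ge_0.
Qed.

Theorem mainTheorem7 (n : nat) (nu : Z) :
  (1 <= n)%nat ->
  IZR nu > rho n - 2 ->
  (forall l : R, b_nu n nu l <> RtoC 0) /\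
  (exists K : R, 0 < K /\
     forall l : R,
       / K * Rpower (1 + l ^ 2) ((2 * rho n - 4 - eps_nu n nu) / 4)
         <= / Cmod (b_nu n nu l) /\
       / Cmod (b_nu n nu l)
         <= K * Rpower (1 + l ^ 2) ((2 * rho n - 4 - eps_nu n nu) / 4)).
Proof.
  intros Hn Hnu. destruct n as [|n']; [lia|].
  assert (Hz : (Z.of_nat (2 * S n') <= nu)%Z).
  { assert (Hlt : IZR (2 * Z.of_nat (S n') - 1) < IZR nu).
    { rewrite minus_IZR, mult_IZR, <- INR_IZR_INZ. unfold rho in Hnu. simpl (IZR 2). simpl (IZR 1). lra. }
    apply lt_IZR in Hlt. lia. }
  set (j := Z.to_nat (nu - Z.of_nat (2 * S n'))).
  assert (Hnuj : IZR nu = 2 * INR (S n') + INR j).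
  { assert (nu = Z.of_nat (2 * S n' + j)) by (unfold j; lia).
    rewrite H, <- INR_IZR_INZ, plus_INR, mult_INR. simpl (INR 2). ring. }
  destruct (Nat.Even_or_Odd j) as [[m Hm]|[m Hm]].
  -
    assert (Hnu2 : IZR nu = 2 * INR (S n') + 2 * INR m) by (rewrite Hnuj, Hm, mult_INR; simpl (INR 2); ring).
    assert (Hc : ~ cond (S n') nu).
    { intros [k Hk]. rewrite Hnu2 in Hk. unfold rho in Hk.
      assert (INR (2 * m + 1) = INR (2 * k)) by (rewrite plus_INR, !mult_INR; simpl (INR 2); simpl (INR 1); lra).
      apply INR_eq in H. lia. }
    assert (He : eps_nu (S n') nu = 1) by (unfold eps_nu; destruct (excluded_middle_informative (cond (S n') nu)); [contradiction|reflexivity]).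
    assert (Hexp : (2 * rho (S n') - 4 - eps_nu (S n') nu) / 4 = INR ((2 * n' + 1) * 2 - 1) / 4).
    { rewrite He. unfold rho. replace ((2 * n' + 1) * 2 - 1)%nat with (4 * n' + 1)%nat by lia.
      rewrite plus_INR, mult_INR, S_INR. simpl (INR 4). simpl (INR 1). field. }
    rewrite Hexp.
    destruct (Psi_even_bounds n' m) as [c1 [c2 [Hc1 Hb]]].
    assert (Hraw : forall l, l <> 0 -> b_raw (S n') nu l = Psi_even n' m l).
    { intros l Hl. unfold b_raw. destruct (excluded_middle_informative (cond (S n') nu)); [contradiction|].
      apply even_eq; auto. }
    pose proof (final_gen (b_raw (S n') nu) (Psi_even n' m) ((2 * n' + 1) * 2 - 1) c1 c2 Hraw
      (ccont_eps _ _ (ccont_Psi_even n' m)) (Psi_even_0 n' m) Hc1 Hb) as Hf.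
    exact Hf.
  -
    assert (Hnu2 : IZR nu = 2 * INR (S n') - 1 + 2 * INR (S m)) by (rewrite Hnuj, Hm, plus_INR, mult_INR, (S_INR m); simpl (INR 2); simpl (INR 1); ring).
    assert (Hc : cond (S n') nu).
    { exists (S m). rewrite Hnu2. unfold rho. field. }
    assert (He : eps_nu (S n') nu = -1) by (unfold eps_nu; destruct (excluded_middle_informative (cond (S n') nu)); [reflexivity|contradiction]).
    assert (Hexp : (2 * rho (S n') - 4 - eps_nu (S n') nu) / 4 = INR ((2 * n' + 1) * 2 + 1) / 4).
    { rewrite He. unfold rho. replace ((2 * n' + 1) * 2 + 1)%nat with (4 * n' + 3)%nat by lia.
      rewrite plus_INR, mult_INR, S_INR. simpl (INR 4). simpl (INR 3). field. }
    rewrite Hexp.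
    destruct (Psi_odd_bounds n' m) as [c1 [c2 [Hc1 Hb]]].
    assert (Hraw : forall l, l <> 0 -> b_raw (S n') nu l = Psi_odd n' m l).
    { intros l Hl. unfold b_raw. destruct (excluded_middle_informative (cond (S n') nu)); [|contradiction].
      apply odd_eq; auto. }
    pose proof (final_gen (b_raw (S n') nu) (Psi_odd n' m) ((2 * n' + 1) * 2 + 1) c1 c2 Hraw
      (ccont_eps _ _ (ccont_Psi_odd n' m)) (Psi_odd_0 n' m) Hc1 Hb) as Hf.
    exact Hf.
Qed.
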